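(* Let $C\subset\mathbb{R}^l$ be closed and let $g:\mathbb{R}^n\to\mathbb{R}^l$ be continuously differentiable near $\bar x\in g^{-1}(C)$ and twice differentiable at $\bar x$. Assume that every pair $(u,\lambda)\in\mathbb{R}^n\times\mathbb{R}^l$ satisfying $u\ne0$, $\nabla g(\bar x)u\in T_C(g(\bar x))$, $\lambda\in N_C(g(\bar x);\nabla g(\bar x)u)$, $\nabla g(\bar x)^T\lambda=0$, and $\tfrac12\langle\nabla^2\langle\lambda,g\rangle(\bar x)u,u\rangle\ge\underline\chi_C(\lambda,g(\bar x);\nabla g(\bar x)u)$ has $\lambda=0$. Then the mapping $x\mapsto g(x)-C$ is metrically subregular at $(\bar x,0)$.
   Context: Metric subregularity of $x\mapsto g(x)-C$ at $(\bar x,0)$: there are $\kappa\ge0$ and a neighborhood $U$ of $\bar x$ with $\operatorname{dist}(x;g^{-1}(C))\le\kappa\operatorname{dist}(g(x);C)$ for $x\in U$. $\langle\lambda,g\rangle(x)=\langle\lambda,g(x)\rangle$. Lower curvature: $\underline\chi_\Omega(\lambda,\bar z;v):=\lim_{\epsilon\downarrow0}\inf\{\langle\lambda,v'-v\rangle/\tau: 0<\tau<\epsilon,\|v'-v\|<\epsilon,\operatorname{dist}(\lambda;N_\Omega(\bar z+\tau v'))<\epsilon\}$ ($\inf\emptyset=+\infty$, $N_\Omega(z)=\emptyset$ off $\Omega$). $T_C$ contingent cone; $N$ limiting normal cone; $N_C(\bar z;w)=\{v:\exists t_k\downarrow0,w_k\to w,v_k\to v,\ \bar z+t_kw_k\in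 C,\ v_k\in\widehat N_C(\bar z+t_kw_k)\}$ the directional limiting normal cone, $\widehat N$ the regular normal cone. *)

(* Defs.v *)
From Stdlib Require Import Reals ClassicalEpsilon.
From mathcomp Require Import ssreflect ssrfun ssrbool eqtype ssrnat fintype bigop.
Set Implicit Arguments.
Unset Strict Implicit.
Local Open Scope R_scope.

Definition vec (n : nat) := 'I_n -> R.
Definition mat (m n : nat) := 'I_m -> 'I_n -> R.

Definition vzero {n} : vec n := fun _ => 0.
Definition vadd {n} (x y : vec n) : vec n := fun i => x i + y i.
Definition vsub {n} (x y : vec n) : vec n := fun i => x i - y i.
Definition vscal {n} (a : R) (x : vec n) : vec n := fun i => a * x i.
Definition dot {n} (x y : vec n) : R := \big[Rplus/0]_(i < n) (x i * y i).
Definition vnorm {n} (x : vec n) : R := sqrt (dot x x).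

Definition mapp {m n} (A : mat m n) (u : vec n) : vec m :=
  fun i => \big[Rplus/0]_(j < n) (A i j * u j).
Definition mtapp {m n} (A : mat m n) (lam : vec m) : vec n :=
  fun j => \big[Rplus/0]_(i < m) (A i j * lam i).

Inductive Rbar := Fin_r (r : R) | p_infty | m_infty.

Definition Rbar_le (x y : Rbar) : Prop :=
  match x, y with
  | m_infty, _ => True
  | _, p_infty => True
  | p_infty, _ => False
  | _, m_infty => False
  | Fin_r a, Fin_r b => a <= b
  end.
Definition Rbar_lt (x y : Rbar) : Prop := Rbar_le x y /\ x <> y.

(* greatest lower bound in [-oo,+oo] of a set of reals (inf of empty = +oo) *)
Definition Rbar_is_inf (E : R -> Prop) (m : Rbar) : Prop :=
  (forall x, E x -> Rbar_le m (Fin_r x)) /\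
  (forall m', (forall x, E x -> Rbar_le m' (Fin_r x)) -> Rbar_le m' m).
Definition Rbar_inf (E : R -> Prop) : Rbar :=
  epsilon (inhabits p_infty) (Rbar_is_inf E).

Definition Rbar_cv_right0 (phi : R -> Rbar) (L : Rbar) : Prop :=
  match L with
  | Fin_r l => forall eta, 0 < eta -> exists d, 0 < d /\
       forall e, 0 < e < d -> exists r, phi e = Fin_r r /\ Rabs (r - l) < eta
  | p_infty => forall M, exists d, 0 < d /\
       forall e, 0 < e < d -> Rbar_lt (Fin_r M) (phi e)
  | m_infty => forall M, exists d, 0 < d /\
       forall e, 0 < e < d -> Rbar_lt (phi e) (Fin_r M)
  end.
Definition Rbar_lim_right0 (phi : R -> Rbar) : Rbar :=
  epsilon (inhabits p_infty) (Rbar_cv_right0 phi).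

Definition dist_set {n} (S : vec n -> Prop) (x : vec n) : Rbar :=
  Rbar_inf (fun r => exists y, S y /\ r = vnorm (vsub x y)).

Definition cv_vec {n} (w : nat -> vec n) (w0 : vec n) : Prop :=
  Un_cv (fun k => vnorm (vsub (w k) w0)) 0.

Definition is_closed {n} (C : vec n -> Prop) : Prop :=
  forall (xk : nat -> vec n) x, (forall k, C (xk k)) -> cv_vec xk x -> C x.

Definition down0 (t : nat -> R) : Prop := (forall k, 0 < t k) /\ Un_cv t 0.

Definition tangent_cone {n} (C : vec n -> Prop) (z w : vec n) : Prop :=
  exists (t : nat -> R) (wk : nat -> vec n),
    down0 t /\ cv_vec wk w /\ forall k, C (vadd z (vscal (t k) (wk k))).

Definition reg_normal {n} (C : vec n -> Prop) (z v : vec n) : Prop :=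
  C z /\ forall eps, 0 < eps -> exists d, 0 < d /\
    forall z', C z' -> vnorm (vsub z' z) < d ->
      dot v (vsub z' z) <= eps * vnorm (vsub z' z).

Definition lim_normal {n} (C : vec n -> Prop) (z v : vec n) : Prop :=
  C z /\ exists (zk vk : nat -> vec n),
    cv_vec zk z /\ cv_vec vk v /\ forall k, reg_normal C (zk k) (vk k).

Definition dir_normal {n} (C : vec n -> Prop) (z w v : vec n) : Prop :=
  exists (t : nat -> R) (wk vk : nat -> vec n),
    down0 t /\ cv_vec wk w /\ cv_vec vk v /\
    forall k, C (vadd z (vscal (t k) (wk k))) /\
              reg_normal C (vadd z (vscal (t k) (wk k))) (vk k).

Definition lower_curv {n} (Om : vec n -> Prop) (lam z v : vec n) : Rbar :=
  Rbar_lim_right0 (fun e =>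
    Rbar_inf (fun r => exists (tau : R) (v' : vec n),
      0 < tau < e /\ vnorm (vsub v' v) < e /\
      Rbar_lt (dist_set (lim_normal Om (vadd z (vscal tau v'))) lam) (Fin_r e) /\
      r = dot lam (vsub v' v) / tau)).

Definition fdiff {n m} (f : vec n -> vec m) (x : vec n) (A : mat m n) : Prop :=
  forall eps, 0 < eps -> exists d, 0 < d /\ forall y, vnorm (vsub y x) < d ->
    vnorm (vsub (vsub (f y) (f x)) (mapp A (vsub y x))) <= eps * vnorm (vsub y x).

Definition cont_at {n m} (f : vec n -> vec m) (x : vec n) : Prop :=
  forall eps, 0 < eps -> exists d, 0 < d /\ forall y, vnorm (vsub y x) < d ->
    vnorm (vsub (f y) (f x)) < eps.

(* Hessian of <lam, g> at xbar, given the second derivatives H i = nabla^2 g_i(xbar) *)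
Definition hess_lag {n l} (H : 'I_l -> mat n n) (lam : vec l) : mat n n :=
  fun j k => \big[Rplus/0]_(i < l) (lam i * H i j k).

(* dist_set(x; g^{-1}(C)) <= kappa * dist_set(g(x); C) on a ball around xbar.
   Both distances are finite whenever C (resp. g^{-1}(C)) is nonempty,
   which is the case in the theorem (g(xbar) in C). *)
Definition real_of (x : Rbar) : R := match x with Fin_r r => r | _ => 0 end.

Definition metric_subregular {n l} (g : vec n -> vec l) (C : vec l -> Prop)
    (xbar : vec n) : Prop :=
  exists kappa d, 0 <= kappa /\ 0 < d /\
    forall x, vnorm (vsub x xbar) < d ->
      Rbar_le (dist_set (fun y => C (g y)) x) (Fin_r (kappa * real_of (dist_set C (g x)))).

(* Main.v *)
Require Import Defs.
From HB Require Import structures.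
From Stdlib Require Import Reals Lra Psatz ClassicalEpsilon FunctionalExtensionality Lia Classical.
From mathcomp Require Import ssreflect ssrfun ssrbool eqtype ssrnat seq fintype bigop.
Local Open Scope R_scope.

Unset Implicit Arguments.

Lemma Rplus_assoc' : associative Rplus.
Proof. move=> x y z; by rewrite Rplus_assoc. Qed.
HB.instance Definition _ := Monoid.isComLaw.Build R 0 Rplus Rplus_assoc' Rplus_comm Rplus_0_l.

Section Sums.
Variable I : Type.
Implicit Types (r : seq I) (F G : I -> R).

Lemma sum_add r F G :
  \big[Rplus/0]_(i <- r) (F i + G i) = \big[Rplus/0]_(i <- r) F i + \big[Rplus/0]_(i <- r) G i.
Proof. by rewrite big_split. Qed.

Lemma sum_scal r a F :
  \big[Rplus/0]_(i <- r) (a * F i) = a * \big[Rplus/0]_(i <- r) F i.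
Proof. elim: r => [|x r IH]; rewrite ?big_nil ?big_cons /=; [ring| rewrite IH; ring]. Qed.

Lemma sum_scalr r a F :
  \big[Rplus/0]_(i <- r) (F i * a) = (\big[Rplus/0]_(i <- r) F i) * a.
Proof. elim: r => [|x r IH]; rewrite ?big_nil ?big_cons /=; [ring| rewrite IH; ring]. Qed.

Lemma sum_opp r F :
  \big[Rplus/0]_(i <- r) (- F i) = - \big[Rplus/0]_(i <- r) F i.
Proof. elim: r => [|x r IH]; rewrite ?big_nil ?big_cons /=; [ring| rewrite IH; ring]. Qed.

Lemma sum_sub r F G :
  \big[Rplus/0]_(i <- r) (F i - G i) = \big[Rplus/0]_(i <- r) F i - \big[Rplus/0]_(i <- r) G i.
Proof. elim: r => [|x r IH]; rewrite ?big_nil ?big_cons /=; [ring| rewrite IH; ring]. Qed.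

Lemma sum_0 r : \big[Rplus/0]_(i <- r) (0:R) = 0.
Proof. elim: r => [|x r IH]; rewrite ?big_nil ?big_cons /=; [ring| rewrite IH; ring]. Qed.

Lemma sum_le r F G : (forall i, F i <= G i) ->
  \big[Rplus/0]_(i <- r) F i <= \big[Rplus/0]_(i <- r) G i.
Proof. move=> h; elim: r => [|x r IH]; rewrite ?big_nil ?big_cons /=; [lra| by apply Rplus_le_compat]. Qed.

Lemma sum_ge0 r F : (forall i, 0 <= F i) -> 0 <= \big[Rplus/0]_(i <- r) F i.
Proof. move=> h; elim: r => [|x r IH]; rewrite ?big_nil ?big_cons /=; [lra| by move: (h x); lra]. Qed.

Lemma sum_abs r F : Rabs (\big[Rplus/0]_(i <- r) F i) <= \big[Rplus/0]_(i <- r) Rabs (F i).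
Proof.
elim: r => [|x r IH]; rewrite ?big_nil ?big_cons /=; first by rewrite Rabs_R0; lra.
by apply: Rle_trans (Rabs_triang _ _) _; lra.
Qed.

Lemma sum_sq_le_sqsum r F : (forall i, 0 <= F i) ->
  \big[Rplus/0]_(i <- r) (F i * F i) <= (\big[Rplus/0]_(i <- r) F i) * (\big[Rplus/0]_(i <- r) F i).
Proof.
move=> h; elim: r => [|x r IH]; rewrite ?big_nil ?big_cons /=; first lra.
have := sum_ge0 r F h; have := h x; nra.
Qed.

Lemma sum_mem_le r F x : (forall i, 0 <= F i) -> List.In x r -> F x <= \big[Rplus/0]_(i <- r) F i.
Proof.
move=> h; elim: r => [|y r IH] //= [->|hin]; rewrite big_cons.
  have := sum_ge0 r F h; lra.
have := IH hin; have := h y; lra.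
Qed.

Lemma sum_cv r (f : nat -> I -> R) (L : I -> R) :
  (forall i, Un_cv (fun k => f k i) (L i)) ->
  Un_cv (fun k => \big[Rplus/0]_(i <- r) f k i) (\big[Rplus/0]_(i <- r) L i).
Proof.
move=> h; elim: r => [|x r IH].
  rewrite big_nil; move=> e he; exists 0%nat => k _; rewrite big_nil /R_dist; rewrite Rminus_0_r Rabs_R0; lra.
rewrite big_cons.
have := CV_plus _ _ _ _ (h x) IH.
by apply: (Un_cv_ext _ _) => k; rewrite big_cons.
Qed.

End Sums.
Arguments sum_add {I}. Arguments sum_scal {I}. Arguments sum_scalr {I}. Arguments sum_opp {I}.
Arguments sum_sub {I}. Arguments sum_0 {I}. Arguments sum_le {I}. Arguments sum_ge0 {I}.
Arguments sum_abs {I}. Arguments sum_sq_le_sqsum {I}. Arguments sum_mem_le {I}. Arguments sum_cv {I}.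
Lemma Rabs_le_inv a b : Rabs a <= b -> - b <= a <= b.
Proof. move=> h; have := Rle_abs a; have := Rle_abs (-a); rewrite Rabs_Ropp; lra. Qed.
Ltac fold_in x e := repeat match goal with H : context [e] |- _ => progress change e with x in H end.
Ltac clear_lets := intros; repeat match goal with x := _ |- _ => subst x end.
Ltac Lra := clear_lets; lra.
Ltac Nra := clear_lets; nra.

Set Implicit Arguments. Unset Strict Implicit.

Ltac vext := apply: functional_extensionality => ?; rewrite /vadd /vsub /vscal /vzero /=; ring.

Section Vec.
Variable n : nat.
Implicit Types x y z : vec n.

Lemma dot_comm x y : dot x y = dot y x.
Proof. rewrite /dot; apply: eq_bigr => i _; ring. Qed.

Lemma dot_addl x y z : dot (vadd x y) z = dot x z + dot y z.
Proof. rewrite /dot -sum_add; apply: eq_bigr => i _; rewrite /vadd; ring. Qed.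
Lemma dot_subl x y z : dot (vsub x y) z = dot x z - dot y z.
Proof. rewrite /dot -sum_sub; apply: eq_bigr => i _; rewrite /vsub; ring. Qed.
Lemma dot_scall a x z : dot (vscal a x) z = a * dot x z.
Proof. rewrite /dot -sum_scal; apply: eq_bigr => i _; rewrite /vscal; ring. Qed.
Lemma dot_addr x y z : dot z (vadd x y) = dot z x + dot z y.
Proof. by rewrite dot_comm dot_addl !(dot_comm z). Qed.
Lemma dot_subr x y z : dot z (vsub x y) = dot z x - dot z y.
Proof. by rewrite dot_comm dot_subl !(dot_comm z). Qed.
Lemma dot_scalr a x z : dot z (vscal a x) = a * dot z x.
Proof. by rewrite dot_comm dot_scall (dot_comm z). Qed.
Lemma dot_zerol x : dot vzero x = 0.
Proof. rewrite /dot big1 // => i _; rewrite /vzero; ring. Qed.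
Lemma dot_zeror x : dot x vzero = 0.
Proof. by rewrite dot_comm dot_zerol. Qed.

Lemma dot_ge0 x : 0 <= dot x x.
Proof. apply: sum_ge0 => i; nra. Qed.

Lemma vnorm_ge0 x : 0 <= vnorm x.
Proof. apply: sqrt_pos. Qed.

Lemma vnorm_sq x : vnorm x * vnorm x = dot x x.
Proof. rewrite /vnorm sqrt_sqrt //; apply dot_ge0. Qed.

Lemma vnorm_eq x r : 0 <= r -> dot x x = r * r -> vnorm x = r.
Proof. move=> hr h; rewrite /vnorm h sqrt_square //. Qed.

Lemma vnorm_le x r : 0 <= r -> dot x x <= r * r -> vnorm x <= r.
Proof. move=> hr h; rewrite /vnorm -(sqrt_square r) //; apply: sqrt_le_1_alt h. Qed.

Lemma CS x y : Rabs (dot x y) <= vnorm x * vnorm y.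
Proof.
have hq : forall t, 0 <= dot x x - 2 * t * dot x y + t * t * dot y y.
  move=> t; have := dot_ge0 (vsub x (vscal t y)).
  rewrite !dot_subl !dot_subr !dot_scall !dot_scalr (dot_comm y x); lra.
have hx := vnorm_sq x; have hy := vnorm_sq y.
have gx := vnorm_ge0 x; have gy := vnorm_ge0 y.
apply: Rsqr_incr_0_var; last nra.
rewrite /Rsqr -Rabs_mult Rabs_pos_eq; last nra.
case: (Req_dec (dot y y) 0) => hyy.
  have : dot x y = 0.
    case: (Req_dec (dot x y) 0) => // hne.
    have := hq ((dot x x + 1) / (2 * dot x y)).
    have -> : 2 * ((dot x x + 1) / (2 * dot x y)) * dot x y = dot x x + 1 by field.
    rewrite hyy; lra.
  move=> hz; rewrite hz; nra.
have hpos : 0 < dot y y by have := dot_ge0 y; lra.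
have := hq (dot x y / dot y y).
have -> : dot x x - 2 * (dot x y / dot y y) * dot x y + dot x y / dot y y * (dot x y / dot y y) * dot y y
  = (dot x x * dot y y - dot x y * dot x y) / dot y y by field; lra.
move=> h.
have : 0 <= dot x x * dot y y - dot x y * dot x y.
  have := Rmult_le_compat_l (dot y y) _ _ (Rlt_le _ _ hpos) h.
  have -> : dot y y * ((dot x x * dot y y - dot x y * dot x y) / dot y y) = dot x x * dot y y - dot x y * dot x y by field; lra.
  lra.
nra.
Qed.
End Vec.

Section Vec2.
Variable n : nat.
Implicit Types x y z : vec n.

Lemma dot_self_sq x : dot x x = \big[Rplus/0]_(i < n) (x i * x i).
Proof. by []. Qed.

Lemma vnorm_triang x y : vnorm (vadd x y) <= vnorm x + vnorm y.
Proof.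
have gx := vnorm_ge0 x; have gy := vnorm_ge0 y.
apply: vnorm_le; first lra.
rewrite dot_addl !dot_addr (dot_comm y x) -vnorm_sq -(vnorm_sq y).
have := CS x y; move=> /Rabs_le_inv [h1 h2]; nra.
Qed.

Lemma vnorm_scal a x : vnorm (vscal a x) = Rabs a * vnorm x.
Proof.
apply: vnorm_eq; first by have := vnorm_ge0 x; have := Rabs_pos a; nra.
rewrite dot_scall dot_scalr -vnorm_sq.
have : Rabs a * Rabs a = a * a by rewrite -Rabs_mult Rabs_pos_eq; nra.
nra.
Qed.

Lemma vnorm_sub_sym x y : vnorm (vsub x y) = vnorm (vsub y x).
Proof.
have -> : vsub x y = vscal (-1) (vsub y x) by vext.
rewrite vnorm_scal Rabs_Ropp Rabs_R1; ring.
Qed.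

Lemma vnorm_sub_triang x y z : vnorm (vsub x z) <= vnorm (vsub x y) + vnorm (vsub y z).
Proof.
have -> : vsub x z = vadd (vsub x y) (vsub y z) by vext.
apply: vnorm_triang.
Qed.

Lemma vnorm_zero : vnorm (@vzero n) = 0.
Proof. apply: vnorm_eq; [lra| rewrite dot_zerol; ring]. Qed.

Lemma vnorm_coord x i : Rabs (x i) <= vnorm x.
Proof.
have g := vnorm_ge0 x.
apply: Rsqr_incr_0_var => //; rewrite /Rsqr vnorm_sq -Rabs_mult Rabs_pos_eq; last nra.
rewrite /dot (bigD1 i) //=.
have : 0 <= \big[Rplus/0]_(j < n | j != i) (x j * x j).
  apply: big_ind => //; [lra | move=> a b; lra | move=> j _; nra].
move: (\big[Rplus/0]_(j < n | j != i) (x j * x j)) => s. move=> ?; lra.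
Qed.

Lemma vnorm_le_sum x : vnorm x <= \big[Rplus/0]_(i < n) Rabs (x i).
Proof.
apply: vnorm_le; first by apply: sum_ge0 => i; apply: Rabs_pos.
apply: Rle_trans (sum_sq_le_sqsum _ _ (fun i => Rabs_pos (x i))).
apply: sum_le => i; rewrite -Rabs_mult Rabs_pos_eq; nra.
Qed.

Lemma vnorm_eq0 x : vnorm x = 0 -> x = vzero.
Proof.
move=> h; apply: functional_extensionality => i.
have := vnorm_coord x i; rewrite h /vzero => hh.
have := Rabs_pos (x i); move=> h2.
have : Rabs (x i) = 0 by lra.
move=> hh0; case: (Req_dec (x i) 0) => // hne; by have := Rabs_no_R0 _ hne.
Qed.

End Vec2.

Set Implicit Arguments. Unset Strict Implicit.

Definition mnorm {m n} (A : mat m n) : R := \big[Rplus/0]_(i < m) \big[Rplus/0]_(j < n) Rabs (A i j).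

Section Mat.
Variables m n : nat.
Implicit Types (A : mat m n) (u v : vec n) (lam : vec m).

Lemma mapp_dot A u i : mapp A u i = dot (A i) u.
Proof. by []. Qed.

Lemma mapp_add A u v : mapp A (vadd u v) = vadd (mapp A u) (mapp A v).
Proof. apply: functional_extensionality => i; by rewrite /vadd !mapp_dot dot_addr. Qed.
Lemma mapp_sub A u v : mapp A (vsub u v) = vsub (mapp A u) (mapp A v).
Proof. apply: functional_extensionality => i; by rewrite /vsub !mapp_dot dot_subr. Qed.
Lemma mapp_scal A a u : mapp A (vscal a u) = vscal a (mapp A u).
Proof. apply: functional_extensionality => i; by rewrite /vscal !mapp_dot dot_scalr. Qed.

Lemma mnorm_ge0 A : 0 <= mnorm A.
Proof. apply: sum_ge0 => i; apply: sum_ge0 => j; apply: Rabs_pos. Qed.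

Lemma mapp_bound A u : vnorm (mapp A u) <= mnorm A * vnorm u.
Proof.
apply: Rle_trans (vnorm_le_sum _) _.
rewrite /mnorm -sum_scalr; apply: sum_le => i.
rewrite -sum_scalr; apply: Rle_trans (sum_abs _ _) _; apply: sum_le => j.
rewrite Rabs_mult; apply: Rmult_le_compat_l; [apply: Rabs_pos| apply: vnorm_coord].
Qed.

Lemma dot_mapp A lam u : dot lam (mapp A u) = dot (mtapp A lam) u.
Proof.
rewrite /dot /mapp /mtapp.
have -> : \big[Rplus/0]_(i < m) (lam i * \big[Rplus/0]_(j < n) (A i j * u j))
        = \big[Rplus/0]_(i < m) \big[Rplus/0]_(j < n) (lam i * (A i j * u j)).
  by apply: eq_bigr => i _; rewrite sum_scal.
rewrite exchange_big; apply: eq_bigr => j _.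
rewrite -sum_scalr; apply: eq_bigr => i _; ring.
Qed.

Lemma dot_mapp_row lam A u : dot lam (mapp A u) = \big[Rplus/0]_(i < m) (lam i * dot (A i) u).
Proof. by []. Qed.

End Mat.

Lemma hess_lag_q {n l} (H : 'I_l -> mat n n) (lam : vec l) (h : vec n) :
  dot (mapp (hess_lag H lam) h) h = \big[Rplus/0]_(i < l) (lam i * dot (mapp (H i) h) h).
Proof.
rewrite /dot /mapp /hess_lag.
have -> : \big[Rplus/0]_(i < n)
    (\big[Rplus/0]_(j < n) (\big[Rplus/0]_(i0 < l) (lam i0 * H i0 i j) * h j) * h i)
   = \big[Rplus/0]_(i < n) \big[Rplus/0]_(i0 < l) (lam i0 * (\big[Rplus/0]_(j < n) (H i0 i j * h j) * h i)).
  apply: eq_bigr => i _.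
  transitivity (\big[Rplus/0]_(j < n) \big[Rplus/0]_(i0 < l) (lam i0 * H i0 i j * h j * h i)).
    rewrite -sum_scalr; apply: eq_bigr => j _; rewrite -!sum_scalr //.
  rewrite exchange_big; apply: eq_bigr => k _; rewrite -sum_scalr -sum_scal; apply: eq_bigr => j _; ring.
rewrite exchange_big; apply: eq_bigr => k _; by rewrite sum_scal.
Qed.

Lemma cv_vec_eps {n} (w : nat -> vec n) w0 :
  cv_vec w w0 <-> forall eps, 0 < eps -> exists N, forall k, (k >= N)%coq_nat -> vnorm (vsub (w k) w0) < eps.
Proof.
split=> h eps he; case: (h eps he) => N hN; exists N => k hk; have := hN k hk;
rewrite /R_dist Rminus_0_r Rabs_pos_eq //; apply: vnorm_ge0.
Qed.

Lemma cv_vec_coord {n} (w : nat -> vec n) w0 i : cv_vec w w0 -> Un_cv (fun k => w k i) (w0 i).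
Proof.
move/cv_vec_eps=> h eps he; case: (h eps he) => N hN; exists N => k hk.
apply: Rle_lt_trans (hN k hk); rewrite /R_dist; apply: (vnorm_coord (vsub (w k) w0) i).
Qed.

Lemma coord_cv_vec {n} (w : nat -> vec n) w0 : (forall i, Un_cv (fun k => w k i) (w0 i)) -> cv_vec w w0.
Proof.
move=> h.
have hs : Un_cv (fun k => \big[Rplus/0]_(i < n) Rabs (w k i - w0 i)) (\big[Rplus/0]_(i < n) 0).
  apply: sum_cv => i eps he; case: (h i eps he) => N hN; exists N => k hk.
  have := hN k hk; rewrite /R_dist Rminus_0_r Rabs_Rabsolu //.
rewrite big1 // in hs.
move=> eps he; case: (hs eps he) => N hN; exists N => k hk.
have := hN k hk; rewrite /R_dist !Rminus_0_r.
have h1 := vnorm_le_sum (vsub (w k) w0).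
have h2 := vnorm_ge0 (vsub (w k) w0).
have h3 : 0 <= \big[Rplus/0]_(i < n) Rabs (w k i - w0 i) by apply: sum_ge0 => i; apply: Rabs_pos.
move: h1 h3; rewrite /vsub.
move: (\big[Rplus/0]_(i < n) Rabs (w k i - w0 i)) => s.
move=> h1 h3; rewrite !Rabs_pos_eq //; lra.
Qed.

Set Implicit Arguments. Unset Strict Implicit.

Definition subs (phi : nat -> nat) := forall j, (phi j < phi (S j))%coq_nat.

Lemma subs_ge phi : subs phi -> forall j, (j <= phi j)%coq_nat.
Proof. move=> h; elim=> [|j IH]; first lia. have := h j; lia. Qed.

Lemma subs_comp phi psi : subs phi -> subs psi -> subs (fun j => phi (psi j)).
Proof.
move=> hp hq j.
have mono : forall a b, (a < b)%coq_nat -> (phi a < phi b)%coq_nat.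
  move=> a b hab; elim: b hab => [|b IH] hab; first lia.
  case: (Nat.eq_dec a b) => [->|hne]; first by apply hp.
  have := IH ltac:(lia); have := hp b; lia.
by apply: mono; apply: hq.
Qed.

Lemma subs_shift N : subs (fun j => (j + N)%coq_nat).
Proof. move=> j; lia. Qed.

Lemma Un_cv_subs u L phi : subs phi -> Un_cv u L -> Un_cv (fun j => u (phi j)) L.
Proof.
move=> hp h eps he; case: (h eps he) => N hN; exists N => j hj; apply: hN.
have := subs_ge hp j; lia.
Qed.

Lemma cv_vec_subs {n} (w : nat -> vec n) w0 phi : subs phi -> cv_vec w w0 -> cv_vec (fun j => w (phi j)) w0.
Proof. move=> hp; exact: Un_cv_subs. Qed.

Lemma inv_small eps : 0 < eps -> exists N : nat, forall j, (j >= N)%coq_nat -> / (INR j + 1) < eps.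
Proof.
move=> he; have [hk1 hk2] := archimed (/ eps); move: (up (/ eps)) hk1 hk2 => k hk1 hk2.
exists (Z.to_nat k) => j hj.
have hj' : (INR (Z.to_nat k) <= INR j) by apply: le_INR.
have : IZR k <= INR (Z.to_nat k).
  rewrite INR_IZR_INZ; apply: IZR_le; lia.
move=> h2.
have hpos : 0 < INR j + 1 by have := pos_INR j; lra.
have hinv : / eps < INR j + 1 by lra.
rewrite -(Rinv_inv eps); apply: Rinv_lt_contravar => //.
apply: Rmult_lt_0_compat => //; by apply: Rinv_0_lt_compat.
Qed.

Lemma BW_R (u : nat -> R) M : (forall k, Rabs (u k) <= M) ->
  exists phi L, subs phi /\ Un_cv (fun j => u (phi j)) L.
Proof.
move=> hb.
have [L hL] : exists L, ValAdh u L.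
  apply: (Bolzano_Weierstrass u (fun c => - M <= c <= M)); first by apply: compact_P3.
  by move=> k; apply: Rabs_le_inv.
have hf : forall N j : nat, exists p, (N <= p)%coq_nat /\ Rabs (u p - L) < / (INR j + 1).
  move=> N j.
  have hpos : 0 < / (INR j + 1) by apply: Rinv_0_lt_compat; have := pos_INR j; lra.
  have := hL (disc L (mkposreal _ hpos)) N.
  case; first by exists (mkposreal _ hpos).
  by move=> p [hp1 hp2]; exists p.
pose f N j := proj1_sig (constructive_indefinite_description _ (hf N j)).
have hfN : forall N j, (N <= f N j)%coq_nat by move=> N j; rewrite /f; case: constructive_indefinite_description => p [].
have hfL : forall N j, Rabs (u (f N j) - L) < / (INR j + 1) by move=> N j; rewrite /f; case: constructive_indefinite_description => p [].
pose phi := fix phi j := match j with O => f O O | S j' => f (S (phi j')) (S j') end.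
exists phi, L; split.
  move=> j /=; have := hfN (S (phi j)) (S j); lia.
move=> eps he; have [N hN] := inv_small he.
exists N => j hj; rewrite /R_dist.
apply: Rlt_trans (hN j hj); case: j hj => [|j] hj /=; first by apply: (hfL O O).
by apply: (hfL (S (phi j)) (S j)).
Qed.

Lemma BW_vec {n} (w : nat -> vec n) M : (forall k, vnorm (w k) <= M) ->
  exists phi w0, subs phi /\ cv_vec (fun j => w (phi j)) w0.
Proof.
move=> hb.
have key : forall s : seq 'I_n, exists phi (w0 : vec n), subs phi /\
    forall i, i \in s -> Un_cv (fun j => w (phi j) i) (w0 i).
  elim=> [|i s [phi [w0 [hp IH]]]].
    exists id, vzero; split => //; move=> j /=; lia.
  have [psi [L [hq hL]]] := @BW_R (fun j => w (phi j) i) M (fun k => Rle_trans _ _ _ (vnorm_coord _ i) (hb (phi k))).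
  exists (fun j => phi (psi j)), (fun k => if k == i then L else w0 k); split.
    by apply: subs_comp.
  move=> k; rewrite in_cons; case: eqP => [-> _|hne] /=; first exact: hL.
  move=> hk; apply: (Un_cv_subs (u := fun j => w (phi j) k)) => //; exact: IH.
have [phi [w0 [hp hc]]] := key (index_enum 'I_n).
exists phi, w0; split => //; apply: coord_cv_vec => i; apply: hc; by rewrite mem_index_enum.
Qed.

Lemma BW_vec_ev {n} (w : nat -> vec n) M N : (forall k, (k >= N)%coq_nat -> vnorm (w k) <= M) ->
  exists phi w0, subs phi /\ cv_vec (fun j => w (phi j)) w0.
Proof.
move=> hb.
have [phi [w0 [hp hc]]] := BW_vec (w := fun k => w (k + N)%coq_nat) (M := M) (fun k => hb (k + N)%coq_nat (Nat.le_add_l N k)).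
exists (fun j => (phi j + N)%coq_nat), w0; split => //.
move=> j; have := hp j; lia.
Qed.

Set Implicit Arguments. Unset Strict Implicit.

Lemma Rbar_le_trans a b c : Rbar_le a b -> Rbar_le b c -> Rbar_le a c.
Proof. case: a; case: b; case: c => //= *; lra. Qed.

Lemma Rbar_inf_ex (E : R -> Prop) : exists m, Rbar_is_inf E m.
Proof.
case: (classic (exists x, E x)) => [hne|hemp]; last first.
  exists p_infty; split; first by move=> x hx; exfalso; apply: hemp; exists x.
  by case.
case: (classic (exists b, forall x, E x -> b <= x)) => [[b hb]|hnb]; last first.
  exists m_infty; split => // m' hm'; case: m' hm' => //= [a|] hm'.
    by exfalso; apply: hnb; exists a => x hx; apply: (hm' x hx).
  by case: hne => x hx; have := hm' x hx.
have hbd : bound (fun y => E (- y)).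
  by exists (- b) => y hy; have := hb _ hy; lra.
have hne' : exists y, E (- y) by case: hne => x hx; exists (- x); rewrite Ropp_involutive.
case: (completeness _ hbd hne') => s [hs1 hs2].
exists (Fin_r (- s)); split.
  move=> x hx /=; have := hs1 (- x); rewrite Ropp_involutive => h; have := h hx; lra.
case=> //= [a|] hm'.
  have : s <= - a by apply: hs2 => y hy; have := hm' _ hy; lra.
  lra.
by case: hne => x hx; have := hm' x hx.
Qed.

Lemma Rbar_inf_spec E : Rbar_is_inf E (Rbar_inf E).
Proof. rewrite /Rbar_inf; apply: epsilon_spec; apply: Rbar_inf_ex. Qed.

Lemma Rbar_inf_le E x : E x -> Rbar_le (Rbar_inf E) (Fin_r x).
Proof. by case: (Rbar_inf_spec E) => h _; apply: h. Qed.

Lemma Rbar_inf_ge E m : (forall x, E x -> Rbar_le m (Fin_r x)) -> Rbar_le m (Rbar_inf E).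
Proof. by case: (Rbar_inf_spec E) => _ h; apply: h. Qed.

Lemma Rbar_inf_mono (E1 E2 : R -> Prop) : (forall x, E1 x -> E2 x) -> Rbar_le (Rbar_inf E2) (Rbar_inf E1).
Proof. move=> h; apply: Rbar_inf_ge => x hx; apply: Rbar_inf_le; exact: h. Qed.

Lemma Rbar_inf_fin (E : R -> Prop) b x0 : E x0 -> (forall x, E x -> b <= x) ->
  exists r, Rbar_inf E = Fin_r r /\ b <= r /\ (forall x, E x -> r <= x) /\
    (forall eta, 0 < eta -> exists x, E x /\ x < r + eta).
Proof.
move=> h0 hb.
have h1 := Rbar_inf_le h0.
have h2 : Rbar_le (Fin_r b) (Rbar_inf E) by apply: Rbar_inf_ge.
case heq: (Rbar_inf E) h1 h2 => [r| |] //= h1 h2.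
exists r; split => //; split => //; split.
  by move=> x hx; have := Rbar_inf_le hx; rewrite heq.
move=> eta he; apply: NNPP => hno.
have : Rbar_le (Fin_r (r + eta)) (Rbar_inf E).
  apply: Rbar_inf_ge => x hx /=; apply: Rnot_lt_le => hlt; apply: hno; by exists x.
rewrite heq /=; lra.
Qed.

Lemma dist_set_spec {n} (S : vec n -> Prop) x a : S a ->
  exists r, dist_set S x = Fin_r r /\ 0 <= r /\ (forall y, S y -> r <= vnorm (vsub x y)) /\
    (forall eta, 0 < eta -> exists y, S y /\ vnorm (vsub x y) < r + eta).
Proof.
move=> ha.
have := @Rbar_inf_fin (fun r => exists y, S y /\ r = vnorm (vsub x y)) 0 (vnorm (vsub x a)).
case.
- by exists a.
- by move=> r [y [_ ->]]; apply: vnorm_ge0.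
move=> r [h1 [h2 [h3 h4]]]; exists r; split => //; split => //; split.
  by move=> y hy; apply: h3; exists y.
move=> eta he; case: (h4 eta he) => z [[y [hy ->]] hz]; by exists y.
Qed.

Lemma dist_set_le {n} (S : vec n -> Prop) x y : S y -> Rbar_le (dist_set S x) (Fin_r (vnorm (vsub x y))).
Proof. move=> hy; apply: Rbar_inf_le; by exists y. Qed.

Lemma lim_right0_le (phi : R -> Rbar) B :
  (forall e1 e2, 0 < e1 -> e1 <= e2 -> Rbar_le (phi e2) (phi e1)) ->
  (forall e, 0 < e -> Rbar_le (phi e) (Fin_r B)) ->
  Rbar_le (Rbar_lim_right0 phi) (Fin_r B).
Proof.
move=> hmono hB.
have hex : exists L, Rbar_cv_right0 phi L.
  case: (classic (exists e0, 0 < e0 /\ phi e0 <> m_infty)) => [[e0 [he0 hne]]|hall]; last first.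
    exists m_infty => M; exists 1; split; first lra.
    move=> e he; have : phi e = m_infty by apply: NNPP => hh; apply: hall; exists e; split => //; lra.
    by move=> ->; split.
  have hfin : forall e, 0 < e -> e <= e0 -> exists r, phi e = Fin_r r /\ r <= B.
    move=> e he hle; have := hmono _ _ he hle; have := hB _ he.
    case: (phi e) => [r| |] //=; first by move=> *; exists r.
    by case: (phi e0) hne => //.
  pose T := fun y => exists e, 0 < e <= e0 /\ phi e = Fin_r y.
  have hTb : bound T by exists B => y [e [[he1 he2] hy]]; have := hB _ he1; rewrite hy.
  have hTne : exists y, T y by case: (hfin e0 he0 (Rle_refl _)) => r [hr _]; exists r, e0; split => //; lra.
  case: (completeness _ hTb hTne) => s [hs1 hs2].
  exists (Fin_r s) => eta heta.
  have [y [[e1 [[he1 he1'] hy]] hys]] : exists y, T y /\ s - eta < y.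
    apply: NNPP => hno; have : s <= s - eta.
      apply: hs2 => y hy; apply: Rnot_lt_le => hlt; apply: hno; by exists y.
    lra.
  exists e1; split => // e [he he'].
  case: (hfin e he ltac:(lra)) => r [hr _]; exists r; split => //.
  have h1 : r <= s by apply: hs1; exists e; split => //; lra.
  have h2 := hmono _ _ he (Rlt_le _ _ he'); rewrite hy hr /= in h2.
  apply: Rabs_def1; lra.
rewrite /Rbar_lim_right0.
have hcv := epsilon_spec (inhabits p_infty) _ hex.
move: hcv; case: (epsilon _ _) => [l| |] //= hcv.
- apply: Rnot_lt_le => hlt.
  case: (hcv (l - B) ltac:(lra)) => d [hd hdd].
  case: (hdd (d / 2) ltac:(lra)) => r [hr hrl].
  have := hB (d / 2) ltac:(lra); rewrite hr /= => hrb.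
  move: hrl => /Rabs_def2; lra.
- case: (hcv B) => d [hd hdd].
  case: (hdd (d / 2) ltac:(lra)) => [h1 h2].
  have := hB (d / 2) ltac:(lra); move: h1 h2.
  case: (phi (d / 2)) => [r| |] //= h1 h2 h3.
  apply: h2; f_equal; lra.
Qed.

Lemma Rbar_lt_mono d e1 e2 : e1 <= e2 -> Rbar_lt d (Fin_r e1) -> Rbar_lt d (Fin_r e2).
Proof.
move=> hle [h1 h2]; split; first by apply: Rbar_le_trans h1 _ => /=.
case: d h1 h2 => //= r h1 h2 [e]; subst; apply: h2; f_equal; lra.
Qed.

Lemma lower_curv_le {n} (Om : vec n -> Prop) lam z v B :
  (forall e eta, 0 < e -> 0 < eta -> exists tau v', 0 < tau < e /\ vnorm (vsub v' v) < e /\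
     Rbar_lt (dist_set (lim_normal Om (vadd z (vscal tau v'))) lam) (Fin_r e) /\
     dot lam (vsub v' v) / tau <= B + eta) ->
  Rbar_le (lower_curv Om lam z v) (Fin_r B).
Proof.
move=> h; apply: lim_right0_le.
  move=> e1 e2 he1 hle; apply: Rbar_inf_mono => x [tau [v' [ht [hv [hd hx]]]]].
  exists tau, v'; split; first lra; split; first lra; split => //.
  exact: Rbar_lt_mono hd.
move=> e he.
have hall : forall eta, 0 < eta -> Rbar_le (Rbar_inf (fun r => exists (tau : R) (v' : vec n),
      0 < tau < e /\ vnorm (vsub v' v) < e /\
      Rbar_lt (dist_set (lim_normal Om (vadd z (vscal tau v'))) lam) (Fin_r e) /\
      r = dot lam (vsub v' v) / tau)) (Fin_r (B + eta)).
  move=> eta heta; case: (h e eta he heta) => tau [v' [h1 [h2 [h3 h4]]]].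
  apply: Rbar_le_trans (Rbar_inf_le _) _; first by exists tau, v'; split; [|split; [|split]]; eauto.
  by [].
move: hall; case: (Rbar_inf _) => [r| |] //= hall.
- apply: Rnot_lt_le => hlt; have := hall ((r - B) / 2) ltac:(lra); lra.
- by have := hall 1 ltac:(lra).
Qed.

Set Implicit Arguments. Unset Strict Implicit.


Lemma deriv_line {n l} (f : vec n -> vec l) (A : mat l n) lam y0 h s0 :
  fdiff f (vadd y0 (vscal s0 h)) A ->
  derivable_pt_lim (fun s => dot lam (f (vadd y0 (vscal s h)))) s0 (dot lam (mapp A h)).
Proof.
move=> hf eps he.
set y := vadd y0 (vscal s0 h).
have gl := vnorm_ge0 lam; have gh := vnorm_ge0 h.
set eta := eps / (2 * (vnorm lam * vnorm h + 1)).
have heta : 0 < eta by rewrite /eta; apply: Rdiv_lt_0_compat => //; nra.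
case: (hf eta heta) => d [hd hfd].
have hdel : 0 < d / (vnorm h + 1) by apply: Rdiv_lt_0_compat; lra.
exists (mkposreal _ hdel) => hh hne /= hlt.
have hy : vadd y0 (vscal (s0 + hh) h) = vadd y (vscal hh h) by rewrite /y; vext.
rewrite hy.
have hyy : vsub (vadd y (vscal hh h)) y = vscal hh h by vext.
have hb := hfd (vadd y (vscal hh h)); rewrite hyy vnorm_scal in hb.
have hah : Rabs hh > 0 by apply: Rabs_pos_lt.
have : Rabs hh * vnorm h < d.
  have : Rabs hh * (vnorm h + 1) < d.
    have := Rmult_lt_compat_r (vnorm h + 1) _ _ ltac:(lra) hlt.
    by rewrite /Rdiv Rmult_assoc Rinv_l; [rewrite Rmult_1_r|lra].
  nra.
move=> hlt2; have {}hb := hb hlt2.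
have hexp : (dot lam (f (vadd y (vscal hh h))) - dot lam (f y)) / hh - dot lam (mapp A h)
   = dot lam (vsub (vsub (f (vadd y (vscal hh h))) (f y)) (mapp A (vscal hh h))) / hh.
  rewrite mapp_scal !dot_subr dot_scalr; field; lra.
rewrite hexp /Rdiv Rabs_mult Rabs_inv.
apply: (Rle_lt_trans _ (vnorm lam * (eta * (Rabs hh * vnorm h)) / Rabs hh)).
  apply: Rmult_le_compat_r; first by left; apply: Rinv_0_lt_compat.
  apply: Rle_trans (CS _ _) _; apply: Rmult_le_compat_l => //.
have -> : vnorm lam * (eta * (Rabs hh * vnorm h)) / Rabs hh = vnorm lam * eta * vnorm h by field; lra.
rewrite /eta.
have -> : vnorm lam * (eps / (2 * (vnorm lam * vnorm h + 1))) * vnorm h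
   = eps * (vnorm lam * vnorm h / (2 * (vnorm lam * vnorm h + 1))) by field; nra.
have : vnorm lam * vnorm h / (2 * (vnorm lam * vnorm h + 1)) < 1.
  have hD : 0 < 2 * (vnorm lam * vnorm h + 1) by nra.
  have := Rmult_lt_compat_r (/ (2 * (vnorm lam * vnorm h + 1))) (vnorm lam * vnorm h) (2 * (vnorm lam * vnorm h + 1)) (Rinv_0_lt_compat _ hD) ltac:(nra).
  by rewrite Rinv_r; [|lra].
nra.
Qed.

Lemma deriv_quad a b s0 : derivable_pt_lim (fun s => a * s + b * (s * s)) s0 (a + 2 * b * s0).
Proof.
move=> eps he.
have hd : 0 < eps / (Rabs b + 1) by apply: Rdiv_lt_0_compat => //; have := Rabs_pos b; lra.
exists (mkposreal _ hd) => hh hne /= hlt.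
have -> : (a * (s0 + hh) + b * ((s0 + hh) * (s0 + hh)) - (a * s0 + b * (s0 * s0))) / hh - (a + 2 * b * s0) = b * hh by field.
rewrite Rabs_mult.
have hb := Rabs_pos b.
have : Rabs hh * (Rabs b + 1) < eps.
  have := Rmult_lt_compat_r (Rabs b + 1) _ _ ltac:(lra) hlt.
  by rewrite /Rdiv Rmult_assoc Rinv_l; [rewrite Rmult_1_r|lra].
have := Rabs_pos hh; nra.
Qed.

Lemma finite_delta {l} (P : 'I_l -> R -> Prop) :
  (forall i d d', P i d -> 0 < d' <= d -> P i d') ->
  (forall i, exists d, 0 < d /\ P i d) -> exists d, 0 < d /\ forall i, P i d.
Proof.
move=> hmono hall.
have key : forall s : seq 'I_l, exists d, 0 < d /\ forall i, i \in s -> P i d.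
  elim=> [|i s [d [hd IH]]]; first by exists 1; split => //; lra.
  case: (hall i) => d' [hd' hi].
  exists (Rmin d d'); split; first by apply: Rmin_pos.
  move=> k; rewrite in_cons; case/orP => [/eqP ->|hk].
    apply: hmono hi _; split; [by apply: Rmin_pos| apply: Rmin_r].
  apply: hmono (IH k hk) _; split; [by apply: Rmin_pos| apply: Rmin_l].
case: (key (index_enum 'I_l)) => d [hd h]; exists d; split => // i; apply: h; by rewrite mem_index_enum.
Qed.

Lemma taylor2 {n l} (g : vec n -> vec l) (J : vec n -> mat l n) (H : 'I_l -> mat n n) xbar delta :
  0 < delta -> (forall y, vnorm (vsub y xbar) < delta -> fdiff g y (J y)) ->
  (forall i, fdiff (fun z => J z i) xbar (H i)) ->
  forall lam eta, 0 < eta -> exists d, 0 < d /\ forall y, vnorm (vsub y xbar) < d ->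
   Rabs (dot lam (vsub (vsub (g y) (g xbar)) (mapp (J xbar) (vsub y xbar)))
         - / 2 * dot (mapp (hess_lag H lam) (vsub y xbar)) (vsub y xbar))
   <= eta * (vnorm (vsub y xbar) * vnorm (vsub y xbar)).
Proof.
move=> hdel hg hJ lam eta heta.
set K := \big[Rplus/0]_(i < l) Rabs (lam i).
have hK : 0 <= K by apply: sum_ge0 => i; apply: Rabs_pos.
set eta' := eta / (K + 1).
have heta' : 0 < eta' by apply: Rdiv_lt_0_compat; lra.
have [d0 [hd0 hP]] := @finite_delta l (fun i d => forall z, vnorm (vsub z xbar) < d ->
   vnorm (vsub (vsub (J z i) (J xbar i)) (mapp (H i) (vsub z xbar))) <= eta' * vnorm (vsub z xbar))
   ltac:(move=> i d d' hPd [hd' hle] z hz; apply: hPd; lra)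
   ltac:(move=> i; case: (hJ i eta' heta') => d [hd hh]; by exists d).
exists (Rmin d0 delta); split; first by apply: Rmin_pos.
move=> y hy.
have hy0 : vnorm (vsub y xbar) < d0 by have := Rmin_l d0 delta; lra.
have hy1 : vnorm (vsub y xbar) < delta by have := Rmin_r d0 delta; lra.
set h := vsub y xbar.
set a := dot lam (mapp (J xbar) h).
set b := / 2 * dot (mapp (hess_lag H lam) h) h.
pose G s := dot lam (g (vadd xbar (vscal s h))).
pose P s := a * s + b * (s * s).
have hnorm : forall s, 0 <= s <= 1 -> vnorm (vsub (vadd xbar (vscal s h)) xbar) <= vnorm h.
  move=> s hs; have -> : vsub (vadd xbar (vscal s h)) xbar = vscal s h by vext.
  rewrite vnorm_scal Rabs_pos_eq; last lra; have := vnorm_ge0 h; nra.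
have hder : forall s, 0 <= s <= 1 -> derivable_pt_lim (minus_fct G P) s
     (dot lam (mapp (J (vadd xbar (vscal s h))) h) - (a + 2 * b * s)).
  move=> s hs; apply: derivable_pt_lim_minus; last exact: deriv_quad.
  apply: deriv_line; apply: hg; have := hnorm s hs; move: hy1; rewrite -/h; lra.
have [c [hc hc01]] := MVT_cor2 _ _ 0 1 Rlt_0_1 hder.
rewrite /minus_fct /G /P in hc.
have e1 : vadd xbar (vscal 1 h) = y by rewrite /h; vext.
have e0 : vadd xbar (vscal 0 h) = xbar by vext.
rewrite e1 e0 in hc.
have -> : dot lam (vsub (vsub (g y) (g xbar)) (mapp (J xbar) h)) - b
    = dot lam (g y) - (a * 1 + b * (1 * 1)) - (dot lam (g xbar) - (a * 0 + b * (0 * 0))).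
  rewrite !dot_subr /a; ring.
rewrite hc Rminus_0_r Rmult_1_r.
set z := vadd xbar (vscal c h).
have hz : vsub z xbar = vscal c h by rewrite /z; vext.
have hzn : vnorm (vsub z xbar) <= vnorm h by apply: hnorm; lra.
have hiden : dot lam (mapp (J z) h) - (a + 2 * b * c)
   = \big[Rplus/0]_(i < l) (lam i * dot (vsub (vsub (J z i) (J xbar i)) (mapp (H i) (vsub z xbar))) h).
  rewrite /a /b hess_lag_q !dot_mapp_row hz.
  have -> : 2 * (/ 2 * \big[Rplus/0]_(i < l) (lam i * dot (mapp (H i) h) h)) * c
      = \big[Rplus/0]_(i < l) (c * (lam i * dot (mapp (H i) h) h)) by rewrite sum_scal; move: (\big[Rplus/0]_(i < l) (lam i * dot (mapp (H i) h) h)) => S; field.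
  rewrite Rminus_plus_distr -!sum_sub; apply: eq_bigr => i _.
  rewrite mapp_scal !dot_subl dot_scall; ring.
rewrite hiden.
apply: Rle_trans (sum_abs _ _) _.
apply: (Rle_trans _ (\big[Rplus/0]_(i < l) (Rabs (lam i) * (eta' * vnorm h * vnorm h)))).
  apply: sum_le => i; rewrite Rabs_mult; apply: Rmult_le_compat_l; first by apply: Rabs_pos.
  apply: Rle_trans (CS _ _) _; apply: Rmult_le_compat_r; first by apply: vnorm_ge0.
  have hzd : vnorm (vsub z xbar) < d0 by move: hy0; rewrite -/h; lra.
  apply: Rle_trans (hP i z hzd) _; apply: Rmult_le_compat_l; lra.
rewrite sum_scalr -/K /h.
set w := vnorm (vsub y xbar).
have := vnorm_ge0 (vsub y xbar); rewrite -/w => hw.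
have : K * eta' <= eta.
  rewrite /eta'; have -> : K * (eta / (K + 1)) = eta * (K / (K + 1)) by field; lra.
  have : K / (K + 1) <= 1.
    have := Rmult_le_compat_r (/ (K + 1)) K (K + 1) (Rlt_le _ _ (Rinv_0_lt_compat _ (Rle_lt_0_plus_1 _ hK))) (Rlt_le _ _ (Rlt_plus_1 K)).
    by rewrite Rinv_r; [|lra].
  nra.
have := Rmult_le_pos _ _ hw hw; nra.
Qed.

Set Implicit Arguments. Unset Strict Implicit.


Lemma vnorm_sq_expand {n} (a b : vec n) :
  vnorm (vsub a b) * vnorm (vsub a b) = vnorm a * vnorm a - 2 * dot a b + vnorm b * vnorm b.
Proof. rewrite !vnorm_sq !dot_subl !dot_subr (dot_comm b a); ring. Qed.

Lemma proximal {l} (C : vec l -> Prop) p ct :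
  C ct -> (forall c, C c -> vnorm (vsub p ct) <= vnorm (vsub p c)) -> 0 < vnorm (vsub p ct) ->
  reg_normal C ct (vscal (/ vnorm (vsub p ct)) (vsub p ct)).
Proof.
move=> hC hmin hpos; split => // eps he.
set et := vnorm (vsub p ct).
exists (2 * et * eps); split; first by apply: Rmult_lt_0_compat => //; Lra.
move=> c hc hlt.
have h1 := hmin c hc.
have hid : vsub p c = vsub (vsub p ct) (vsub c ct) by vext.
have hsq : vnorm (vsub p c) * vnorm (vsub p c)
   = et * et - 2 * dot (vsub p ct) (vsub c ct) + vnorm (vsub c ct) * vnorm (vsub c ct).
  by rewrite hid vnorm_sq_expand.
have hge := vnorm_ge0 (vsub c ct).
have hdot : 2 * dot (vsub p ct) (vsub c ct) <= vnorm (vsub c ct) * vnorm (vsub c ct).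
  have : et * et <= vnorm (vsub p c) * vnorm (vsub p c).
    have := vnorm_ge0 (vsub p c); rewrite /et; Nra.
  Lra.
rewrite dot_scall.
have hinv : 0 < / et by apply: Rinv_0_lt_compat.
have : / et * dot (vsub p ct) (vsub c ct) <= / et * (vnorm (vsub c ct) * vnorm (vsub c ct) / 2).
  apply: Rmult_le_compat_l; Lra.
have : / et * (vnorm (vsub c ct) * vnorm (vsub c ct) / 2) <= eps * vnorm (vsub c ct).
  have -> : / et * (vnorm (vsub c ct) * vnorm (vsub c ct) / 2) = vnorm (vsub c ct) * (vnorm (vsub c ct) / (2 * et)) by field; Lra.
  rewrite (Rmult_comm eps); apply: Rmult_le_compat_l => //.
  have -> : vnorm (vsub c ct) / (2 * et) = / (2 * et) * vnorm (vsub c ct) by rewrite /Rdiv Rmult_comm.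
  have -> : eps = / (2 * et) * (2 * et * eps) by field; Lra.
  apply: Rmult_le_compat_l; [left; apply: Rinv_0_lt_compat; Lra| Lra].
Lra.
Qed.

Lemma fdiff_lip {n m} (f : vec n -> vec m) x A : fdiff f x A ->
  exists d K, 0 < d /\ 0 <= K /\ forall y, vnorm (vsub y x) < d -> vnorm (vsub (f y) (f x)) <= K * vnorm (vsub y x).
Proof.
move=> hf; case: (hf 1 Rlt_0_1) => d [hd h].
exists d, (mnorm A + 1); split => //; split; first by have := mnorm_ge0 A; Lra.
move=> y hy; have h1 := h y hy.
have -> : vsub (f y) (f x) = vadd (vsub (vsub (f y) (f x)) (mapp A (vsub y x))) (mapp A (vsub y x)) by vext.
apply: Rle_trans (vnorm_triang _ _) _.
have := mapp_bound A (vsub y x); Lra.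
Qed.

Lemma stationarity {n l} (g : vec n -> vec l) (Jt : mat l n) xt x0 ct mu rho :
  fdiff g xt Jt -> 0 < vnorm (vsub (g xt) ct) -> 0 <= mu -> 0 < rho ->
  (forall x, vnorm (vsub x xt) <= rho ->
     vnorm (vsub (g xt) ct) + mu * vnorm (vsub xt x0) <= vnorm (vsub (g x) ct) + mu * vnorm (vsub x x0)) ->
  vnorm (mtapp Jt (vscal (/ vnorm (vsub (g xt) ct)) (vsub (g xt) ct))) <= mu.
Proof.
move=> hf hpos hmu hrho hmin.
set et := vnorm (vsub (g xt) ct).
set a := vsub (g xt) ct.
set lam := vscal (/ et) a.
set d := mtapp Jt lam.
set w := mapp Jt d.
apply: Rnot_lt_le => hD.
set D := vnorm d.
have hD0 : 0 < D by Lra.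
have hdd : dot d d = D * D by rewrite /D vnorm_sq.
have haw : dot a w = et * (D * D).
  have -> : a = vscal et lam by rewrite /lam; apply: functional_extensionality => i; rewrite /vscal; field; Lra.
  by rewrite dot_scall /w dot_mapp -/d hdd.
set eta := (D - mu) / 2.
have heta : 0 < eta by rewrite /eta; Lra.
case: (hf eta heta) => d1 [hd1 hfd].
set W := vnorm w.
have hW := vnorm_ge0 w.
set s := Rmin (Rmin (d1 / (2 * D)) (rho / D)) (Rmin (et / (D * D)) (D * (D - mu) * et / (2 * (W * W + 1)))).
have p1 : 0 < D * (D - mu) * et by apply: Rmult_lt_0_compat; [apply: Rmult_lt_0_compat|]; Lra.
have hs0 : 0 < s.
  rewrite /s; apply: Rmin_pos; apply: Rmin_pos; apply: Rdiv_lt_0_compat; Nra.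
have hs1 : s * D < d1.
  have : s <= d1 / (2 * D) by apply: Rle_trans (Rmin_l _ _) (Rmin_l _ _).
  move=> h; have := Rmult_le_compat_r D _ _ (Rlt_le _ _ hD0) h.
  have -> : d1 / (2 * D) * D = d1 / 2 by field; Lra.
  Lra.
have hs2 : s * D <= rho.
  have : s <= rho / D by apply: Rle_trans (Rmin_l _ _) (Rmin_r _ _).
  move=> h; have := Rmult_le_compat_r D _ _ (Rlt_le _ _ hD0) h.
  have -> : rho / D * D = rho by field; Lra.
  Lra.
have hs3 : s * (D * D) <= et.
  have : s <= et / (D * D) by apply: Rle_trans (Rmin_r _ _) (Rmin_l _ _).
  move=> h; have := Rmult_le_compat_r (D * D) _ _ ltac:(Nra) h.
  have -> : et / (D * D) * (D * D) = et by field; Lra.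
  Lra.
have hs4 : s * (W * W) < et * (D * (D - mu)).
  have : s <= D * (D - mu) * et / (2 * (W * W + 1)) by apply: Rle_trans (Rmin_r _ _) (Rmin_r _ _).
  move=> h; have := Rmult_le_compat_r (W * W) _ _ ltac:(Nra) h.
  have -> : D * (D - mu) * et / (2 * (W * W + 1)) * (W * W) = (D * (D - mu) * et) * (W * W / (2 * (W * W + 1))) by field; Nra.
  have : W * W / (2 * (W * W + 1)) < 1.
    have hp : 0 < 2 * (W * W + 1) by Nra.
    have := Rmult_lt_compat_r (/ (2 * (W * W + 1))) (W * W) (2 * (W * W + 1)) (Rinv_0_lt_compat _ hp) ltac:(Nra).
    by rewrite Rinv_r; [|Lra].
  move=> h2 h3. Nra.
set x := vsub xt (vscal s d).
have hxx : vsub x xt = vscal (- s) d by rewrite /x; vext.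
have hnx : vnorm (vsub x xt) = s * D by rewrite hxx vnorm_scal Rabs_Ropp Rabs_pos_eq; Lra.
have h1 := hmin x ltac:(Lra).
have h2 : vnorm (vsub x x0) <= s * D + vnorm (vsub xt x0) by rewrite -hnx; apply: vnorm_sub_triang.
have h3 : vnorm (vsub (vsub (g x) (g xt)) (mapp Jt (vsub x xt))) <= eta * (s * D).
  rewrite -hnx; apply: hfd; Lra.
have hgid : vsub (g x) ct = vadd (vsub a (vscal s w)) (vsub (vsub (g x) (g xt)) (mapp Jt (vsub x xt))).
  rewrite hxx mapp_scal /w /a; vext.
have h4 : vnorm (vsub a (vscal s w)) <= et - s * (D * D) + s * s * (W * W) / (2 * et).
  apply: vnorm_le.
    have : 0 <= s * s * (W * W) / (2 * et) by apply: Rmult_le_pos; [Nra| left; apply: Rinv_0_lt_compat; Lra].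
    Lra.
  rewrite -vnorm_sq vnorm_sq_expand dot_scalr haw vnorm_scal Rabs_pos_eq; last Lra.
  change (vnorm a) with et; change (vnorm w) with W.
  have heq : (et - s * (D * D) + s * s * (W * W) / (2 * et)) * (et - s * (D * D) + s * s * (W * W) / (2 * et))
     = et * et - 2 * (s * (et * (D * D))) + s * W * (s * W) + (s * (D * D) - s * s * (W * W) / (2 * et)) * (s * (D * D) - s * s * (W * W) / (2 * et)) by field; Lra.
  have := Rle_0_sqr (s * (D * D) - s * s * (W * W) / (2 * et)); rewrite /Rsqr; Lra.
have h5 : vnorm (vsub (g x) ct) <= et - s * (D * D) + s * s * (W * W) / (2 * et) + eta * (s * D).
  rewrite hgid; apply: Rle_trans (vnorm_triang _ _) _; Lra.
have h6 : s * (D * D) <= s * s * (W * W) / (2 * et) + eta * (s * D) + mu * (s * D).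
  have := Rmult_le_compat_l mu _ _ hmu h2; Lra.
have h7 : D * D <= s * (W * W) / (2 * et) + (eta + mu) * D.
  have : s * (D * D) <= s * (s * (W * W) / (2 * et) + (eta + mu) * D).
    have -> : s * (s * (W * W) / (2 * et) + (eta + mu) * D) = s * s * (W * W) / (2 * et) + eta * (s * D) + mu * (s * D) by field; Lra.
    Lra.
  move=> h; apply: (Rmult_le_reg_l s) => //.
have h8 : s * (W * W) / (2 * et) < D * (D - mu) / 2.
  have -> : s * (W * W) / (2 * et) = (s * (W * W)) * / (2 * et) by [].
  have -> : D * (D - mu) / 2 = (et * (D * (D - mu))) * / (2 * et) by field; Lra.
  apply: Rmult_lt_compat_r => //; apply: Rinv_0_lt_compat; Lra.
rewrite /eta in h7; Nra.
Qed.

Set Implicit Arguments. Unset Strict Implicit.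


Lemma choice_nat {A} (P : nat -> A -> Prop) : (forall j, exists a, P j a) -> exists f, forall j, P j (f j).
Proof.
move=> h; exists (fun j => proj1_sig (constructive_indefinite_description _ (h j))).
by move=> j; case: constructive_indefinite_description.
Qed.

Lemma vnorm_le_sub {n} (x y : vec n) : vnorm x <= vnorm (vsub x y) + vnorm y.
Proof.
have -> : x = vadd (vsub x y) y by vext.
apply: Rle_trans (vnorm_triang _ _) _.
have -> : vsub (vadd (vsub x y) y) y = vsub x y by vext.
Lra.
Qed.

Lemma inv_INR_le j k : (j <= k)%coq_nat -> / (INR k + 1) <= / (INR j + 1).
Proof.
move=> h; apply: Rinv_le_contravar; first by have := pos_INR j; Lra.
have := le_INR _ _ h; Lra.
Qed.

Lemma cv_vec_ev {n} (w : nat -> vec n) w0 eps : cv_vec w w0 -> 0 < eps ->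
  exists N, forall k, (k >= N)%coq_nat -> vnorm (vsub (w k) w0) < eps.
Proof. move/cv_vec_eps => h he; exact: h. Qed.
Arguments cv_vec_ev {n w w0} eps.

Lemma minimizer {n l} (C : vec l -> Prop) (g : vec n -> vec l) (J : vec n -> mat l n) x0 R0 mu c0 :
  is_closed C -> C c0 -> 0 <= R0 -> 0 <= mu ->
  (forall y, vnorm (vsub y x0) <= R0 -> fdiff g y (J y)) ->
  exists xt ct, vnorm (vsub xt x0) <= R0 /\ C ct /\
    forall x c, vnorm (vsub x x0) <= R0 -> C c ->
      vnorm (vsub (g xt) ct) + mu * vnorm (vsub xt x0) <= vnorm (vsub (g x) c) + mu * vnorm (vsub x x0).
Proof.
move=> hC hc0 hR0 hmu hg.
pose Phi x c := vnorm (vsub (g x) c) + mu * vnorm (vsub x x0).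
have hPhi0 : forall x c, 0 <= Phi x c.
  move=> x c; rewrite /Phi; have := vnorm_ge0 (vsub (g x) c); have := vnorm_ge0 (vsub x x0); Nra.
have hx00 : vnorm (vsub x0 x0) <= R0.
  have -> : vsub x0 x0 = vzero by vext.
  by rewrite vnorm_zero.
have [m [_ [hm0 [hmlb hmapp]]]] := @Rbar_inf_fin
   (fun v => exists x c, vnorm (vsub x x0) <= R0 /\ C c /\ v = Phi x c) 0 (Phi x0 c0)
   ltac:(by exists x0, c0) ltac:(by move=> v [x [c [_ [_ ->]]]]).
have [f hf] : exists f : nat -> vec n * vec l, forall j,
    vnorm (vsub (f j).1 x0) <= R0 /\ C (f j).2 /\ Phi (f j).1 (f j).2 < m + / (INR j + 1).
  apply: (@choice_nat _ (fun j (p : vec n * vec l) => vnorm (vsub p.1 x0) <= R0 /\ C p.2 /\ Phi p.1 p.2 < m + / (INR j + 1))) => j.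
  have hp : 0 < / (INR j + 1) by apply: Rinv_0_lt_compat; have := pos_INR j; Lra.
  case: (hmapp _ hp) => v [[x [c [hx [hc ->]]]] hv]; by exists (x, c).
pose xs j := (f j).1. pose cs j := (f j).2.
have [phi1 [xst [hp1 hcv1]]] : exists phi w0, subs phi /\ cv_vec (fun j => xs (phi j)) w0.
  apply: (@BW_vec _ xs (vnorm x0 + R0)) => j.
  have := vnorm_le_sub (xs j) x0; have := (hf j).1; rewrite /xs; Lra.
have hxst : vnorm (vsub xst x0) <= R0.
  apply: Rnot_lt_le => hlt.
  case: (cv_vec_ev (vnorm (vsub xst x0) - R0) hcv1 ltac:(Lra)) => N hN.
  have := hN N (le_n N); have := (hf (phi1 N)).1; rewrite -/(xs (phi1 N)).
  have := vnorm_sub_triang xst (xs (phi1 N)) x0; rewrite (vnorm_sub_sym xst (xs (phi1 N))); Lra.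
have [d1 [K [hd1 [hK hlip]]]] := fdiff_lip (hg _ hxst).
case: (cv_vec_ev (Rmin d1 1) hcv1 (Rmin_pos _ _ hd1 Rlt_0_1)) => N1 hN1.
have hclose : forall j, (j >= N1)%coq_nat -> vnorm (vsub (g (xs (phi1 j))) (g xst)) <= K * vnorm (vsub (xs (phi1 j)) xst).
  move=> j hj; apply: hlip; have := hN1 j hj; have := Rmin_l d1 1; Lra.
have [phi2 [cst [hp2 hcv2]]] : exists phi w0, subs phi /\ cv_vec (fun j => cs (phi1 (phi j))) w0.
  apply: (@BW_vec_ev _ (fun j => cs (phi1 j)) (m + 1 + vnorm (g xst) + K) N1) => j hj.
  have h1 := vnorm_le_sub (cs (phi1 j)) (g (xs (phi1 j))).
  have h2 := vnorm_le_sub (g (xs (phi1 j))) (g xst).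
  have h3 := hclose j hj.
  have h4 : vnorm (vsub (xs (phi1 j)) xst) <= 1 by have := hN1 j hj; have := Rmin_r d1 1; Lra.
  have h5 := (hf (phi1 j)).2.2; rewrite -/(xs (phi1 j)) -/(cs (phi1 j)) /Phi in h5.
  have h6 : / (INR (phi1 j) + 1) <= 1.
    rewrite -Rinv_1; apply: Rinv_le_contravar; [Lra| have := pos_INR (phi1 j); Lra].
  have h7 := vnorm_ge0 (vsub (xs (phi1 j)) x0).
  rewrite (vnorm_sub_sym (cs _)) in h1.
  have : 0 <= mu * vnorm (vsub (xs (phi1 j)) x0) by Nra.
  Nra.
pose psi j := phi1 (phi2 j).
have hpsi : subs psi by apply: subs_comp.
have hcvx : cv_vec (fun j => xs (psi j)) xst by apply: (cv_vec_subs (w := fun j => xs (phi1 j))).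
have hCst : C cst by apply: (hC (fun j => cs (psi j))) => // j; exact: (hf (psi j)).2.1.
have hmin : Phi xst cst <= m.
  apply: Rnot_lt_le => hlt.
  set eta := (Phi xst cst - m) / 4.
  have heta : 0 < eta by rewrite /eta; Lra.
  have hKm : 0 < K + mu + 1 by Lra.
  case: (cv_vec_ev (Rmin d1 (eta / (K + mu + 1))) hcvx (Rmin_pos _ _ hd1 (Rdiv_lt_0_compat _ _ heta hKm))) => N2 hN2.
  case: (cv_vec_ev eta hcv2 heta) => N3 hN3.
  case: (inv_small heta) => N4 hN4.
  pose j := Nat.add (Nat.add (Nat.add N1 N2) N3) N4.
  have hj1 : (psi j >= N1)%coq_nat by apply: (Nat.le_trans _ j); [rewrite /j; lia | exact: subs_ge].
  have hx1 := hN2 j ltac:(rewrite /j; lia).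
  have hx2 : vnorm (vsub (xs (psi j)) xst) < eta / (K + mu + 1) by have := Rmin_r d1 (eta / (K + mu + 1)); Lra.
  have hx3 : vnorm (vsub (xs (psi j)) xst) < d1 by have := Rmin_l d1 (eta / (K + mu + 1)); Lra.
  have hc1 := hN3 j ltac:(rewrite /j; lia).
  have hinv : / (INR (psi j) + 1) < eta.
    apply: Rle_lt_trans (inv_INR_le (subs_ge hpsi j)) _; apply: hN4; rewrite /j; lia.
  have hg1 := hlip _ hx3.
  have hf1 := (hf (psi j)).2.2; rewrite -/(xs (psi j)) -/(cs (psi j)) in hf1.
  have t1 := vnorm_sub_triang (g xst) (g (xs (psi j))) cst.
  have t2 := vnorm_sub_triang (g (xs (psi j))) (cs (psi j)) cst.
  have t3 := vnorm_sub_triang xst (xs (psi j)) x0.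
  rewrite (vnorm_sub_sym (g xst) (g (xs (psi j)))) in t1; rewrite (vnorm_sub_sym xst (xs (psi j))) in t3.
  have hKx : (K + mu) * vnorm (vsub (xs (psi j)) xst) <= eta.
    have : (K + mu) * vnorm (vsub (xs (psi j)) xst) <= (K + mu + 1) * vnorm (vsub (xs (psi j)) xst).
      have := vnorm_ge0 (vsub (xs (psi j)) xst); Nra.
    have : (K + mu + 1) * vnorm (vsub (xs (psi j)) xst) <= eta.
      have := Rmult_lt_compat_l (K + mu + 1) _ _ hKm hx2.
      have -> : (K + mu + 1) * (eta / (K + mu + 1)) = eta by field; Lra.
      Lra.
    Lra.
  have : Phi xst cst < m + 4 * eta.
    rewrite /Phi in hf1 *.
    have := Rmult_le_compat_l mu _ _ hmu t3.
    Nra.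
  rewrite /eta; Lra.
exists xst, cst; split => //; split => // x c hx hc.
apply: Rle_trans hmin _; apply: hmlb; by exists x, c.
Qed.

Set Implicit Arguments. Unset Strict Implicit.


Lemma vsub_eq0 {n} (a b : vec n) : vnorm (vsub a b) = 0 -> a = b.
Proof.
move/vnorm_eq0 => h; apply: functional_extensionality => i.
have := f_equal (fun v => v i) h; rewrite /vsub /vzero /=; Lra.
Qed.

Lemma core {n l} (C : vec l -> Prop) (g : vec n -> vec l) (J : vec n -> mat l n) x0 r eps :
  is_closed C -> 0 < r ->
  (forall y, vnorm (vsub y x0) <= r / 2 -> fdiff g y (J y)) ->
  (forall y, C (g y) -> r <= vnorm (vsub x0 y)) ->
  (forall eta, 0 < eta -> exists c, C c /\ vnorm (vsub (g x0) c) < eps + eta) ->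
  exists xt ct, C ct /\ 0 < vnorm (vsub (g xt) ct) /\ vnorm (vsub (g xt) ct) <= eps /\
    vnorm (vsub xt x0) <= r / 4 /\
    reg_normal C ct (vscal (/ vnorm (vsub (g xt) ct)) (vsub (g xt) ct)) /\
    vnorm (mtapp (J xt) (vscal (/ vnorm (vsub (g xt) ct)) (vsub (g xt) ct))) <= 4 * eps / r.
Proof.
move=> hC hr hg hS hdist.
have heps : 0 <= eps.
  apply: Rnot_lt_le => hlt; case: (hdist (- eps / 2) ltac:(Lra)) => c [_ hc].
  have := vnorm_ge0 (vsub (g x0) c); Lra.
case: (hdist 1 Rlt_0_1) => c0 [hc0 _].
have hmu : 0 <= 4 * eps / r by apply: Rmult_le_pos; [Lra| left; apply: Rinv_0_lt_compat].
have [xt [ct [hxt [hct hmin]]]] := @minimizer n l C g J x0 (r / 2) (4 * eps / r) c0 hC hc0 ltac:(Lra) hmu hg.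
have hx00 : vnorm (vsub x0 x0) = 0.
  have -> : vsub x0 x0 = vzero by vext.
  by rewrite vnorm_zero.
set et := vnorm (vsub (g xt) ct).
have het0 := vnorm_ge0 (vsub (g xt) ct).
have hphi : et + 4 * eps / r * vnorm (vsub xt x0) <= eps.
  apply: Rnot_lt_le => hlt.
  case: (hdist (et + 4 * eps / r * vnorm (vsub xt x0) - eps) ltac:(Lra)) => c [hc hcl].
  have := hmin x0 c ltac:(Lra) hc; rewrite hx00; Lra.
have hmx : 0 <= 4 * eps / r * vnorm (vsub xt x0) by apply: Rmult_le_pos => //; apply: vnorm_ge0.
have hetpos : 0 < et.
  case: het0 => // h0; exfalso.
  have hgc : g xt = ct by apply: vsub_eq0; rewrite -h0.
  have := hS xt; rewrite hgc => /(_ hct); rewrite vnorm_sub_sym; Lra.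
have hepspos : 0 < eps by Lra.
have hx4 : vnorm (vsub xt x0) <= r / 4.
  have : 4 * eps / r * vnorm (vsub xt x0) <= eps by Lra.
  have h4e : 0 < 4 * eps by Lra.
  move=> h; have := Rmult_le_compat_l (r / (4 * eps)) _ _ (Rlt_le _ _ (Rdiv_lt_0_compat _ _ hr h4e)) h.
  have -> : r / (4 * eps) * (4 * eps / r * vnorm (vsub xt x0)) = vnorm (vsub xt x0) by field; Lra.
  have -> : r / (4 * eps) * eps = r / 4 by field; Lra.
  by [].
exists xt, ct; split => //; split => //; split; first by Lra.
split => //; split.
  apply: proximal => // c hc.
  have := hmin xt c hxt hc; Lra.
apply: (stationarity (x0 := x0) (rho := r / 4)) => //.
- by apply: hg.
- Lra.
move=> x hx; apply: hmin => //.
have := vnorm_sub_triang x xt x0; Lra.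
Qed.

Set Implicit Arguments. Unset Strict Implicit.


Lemma unit_limit {n} (w : nat -> vec n) w0 : cv_vec w w0 -> (forall k, vnorm (w k) = 1) -> vnorm w0 = 1.
Proof.
move=> hc h1; apply: NNPP => hne.
have hpos : 0 < Rabs (vnorm w0 - 1) by apply: Rabs_pos_lt; Lra.
case: (cv_vec_ev (Rabs (vnorm w0 - 1)) hc hpos) => N hN.
have := hN N (le_n N); have := h1 N.
have := vnorm_le_sub (w N) w0; have := vnorm_le_sub w0 (w N).
rewrite (vnorm_sub_sym w0 (w N)) => a b c d.
move: hne; case: (Rcase_abs (vnorm w0 - 1)) => hs hne.
  rewrite Rabs_left // in d; Lra.
rewrite Rabs_right // in d; Lra.
Qed.

Lemma vnorm_vzero_neq {n} (w : vec n) : vnorm w = 1 -> w <> vzero.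
Proof. move=> h e; rewrite e vnorm_zero in h; Lra. Qed.

Definition quadf {n} (M : mat n n) (x : vec n) := dot (mapp M x) x.

Lemma quadf_scal {n} (M : mat n n) a x : quadf M (vscal a x) = a * a * quadf M x.
Proof. rewrite /quadf mapp_scal dot_scall dot_scalr; ring. Qed.

Lemma quadf_diff {n} (M : mat n n) a b :
  Rabs (quadf M a - quadf M b) <= mnorm M * (vnorm a + vnorm b) * vnorm (vsub a b).
Proof.
have -> : quadf M a - quadf M b = dot (mapp M a) (vsub a b) + dot (mapp M (vsub a b)) b.
  rewrite /quadf mapp_sub !dot_subr !dot_subl; ring.
apply: Rle_trans (Rabs_triang _ _) _.
have h1 := CS (mapp M a) (vsub a b).
have h2 := CS (mapp M (vsub a b)) b.
have h3 := mapp_bound M a. have h4 := mapp_bound M (vsub a b).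
have g1 := vnorm_ge0 (vsub a b). have g2 := vnorm_ge0 b. have g3 := vnorm_ge0 a.
have g4 := mnorm_ge0 M.
have e1 : vnorm (mapp M a) * vnorm (vsub a b) <= mnorm M * vnorm a * vnorm (vsub a b) by Nra.
have e2 : vnorm (mapp M (vsub a b)) * vnorm b <= mnorm M * vnorm (vsub a b) * vnorm b by Nra.
Nra.
Qed.

Lemma lim_normal_of_reg {l} (C : vec l -> Prop) z v : reg_normal C z v -> lim_normal C z v.
Proof.
move=> h; split; first by case: h.
exists (fun _ => z), (fun _ => v); split; last split => //.
- move=> e he; exists O => k _; rewrite /R_dist.
  have -> : vsub z z = vzero by vext.
  rewrite vnorm_zero Rminus_0_r Rabs_R0; Lra.
- move=> e he; exists O => k _; rewrite /R_dist.
  have -> : vsub v v = vzero by vext.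
  rewrite vnorm_zero Rminus_0_r Rabs_R0; Lra.
Qed.

Lemma dist_lt {l} (S : vec l -> Prop) lam mu e : S mu -> vnorm (vsub lam mu) < e -> Rbar_lt (dist_set S lam) (Fin_r e).
Proof.
move=> hs hlt.
have [r [hr [_ [hle _]]]] := dist_set_spec lam hs.
have := hle mu hs; rewrite hr => h.
split; first by rewrite /=; Lra.
move=> [e']; Lra.
Qed.

Lemma Un_cv_bound (u : nat -> R) eps : Un_cv u 0 -> 0 < eps -> exists N, forall k, (k >= N)%coq_nat -> Rabs (u k) < eps.
Proof.
move=> h he; case: (h eps he) => N hN; exists N => k hk; have := hN k hk; rewrite /R_dist Rminus_0_r //.
Qed.

Unset Implicit Arguments.


Section Limit.
Variables (n l : nat) (C : vec l -> Prop) (g : vec n -> vec l) (xbar : vec n) (J : vec n -> mat l n)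
  (H : 'I_l -> mat n n) (delta : R)
  (xs : nat -> vec n) (cs : nat -> vec l) (tk ek : nat -> R) (uk : nat -> vec n) (lk : nat -> vec l)
  (u : vec n) (lam : vec l).
Hypotheses (hdel : 0 < delta) (hg : forall y, vnorm (vsub y xbar) < delta -> fdiff g y (J y))
  (hJc : forall y, vnorm (vsub y xbar) < delta -> forall i, cont_at (fun z => J z i) y)
  (hJ : forall i, fdiff (fun z => J z i) xbar (H i))
  (htk : forall k, tk k = vnorm (vsub (xs k) xbar))
  (hek : forall k, ek k = vnorm (vsub (g (xs k)) (cs k)))
  (huk : forall k, uk k = vscal (/ tk k) (vsub (xs k) xbar))
  (hlk : forall k, lk k = vscal (/ ek k) (vsub (g (xs k)) (cs k)))
  (hC : forall k, C (cs k)) (ht0 : forall k, 0 < tk k) (htcv : Un_cv tk 0)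
  (he0 : forall k, 0 < ek k) (hecv : Un_cv (fun k => ek k / tk k) 0)
  (hreg : forall k, reg_normal C (cs k) (lk k))
  (hmtcv : Un_cv (fun k => vnorm (mtapp (J (xs k)) (lk k))) 0)
  (hucv : cv_vec uk u) (hlcv : cv_vec lk lam).

Lemma huk1 k : vnorm (uk k) = 1.
Proof.
rewrite huk vnorm_scal -htk Rabs_pos_eq; last by left; apply: Rinv_0_lt_compat.
field; have := ht0 k; Lra.
Qed.

Lemma hlk1 k : vnorm (lk k) = 1.
Proof.
rewrite hlk vnorm_scal -hek Rabs_pos_eq; last by left; apply: Rinv_0_lt_compat.
field; have := he0 k; Lra.
Qed.

Lemma hxs : cv_vec xs xbar.
Proof. move=> e he; case: (htcv e he) => N hN; exists N => k hk; rewrite -htk; exact: hN k hk. Qed.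

Lemma hJent i j : Un_cv (fun k => J (xs k) i j) (J xbar i j).
Proof.
have hx0 : vnorm (vsub xbar xbar) < delta.
  have -> : vsub xbar xbar = vzero by vext.
  by rewrite vnorm_zero.
move=> e he; case: (hJc xbar hx0 i e he) => d [hd hcd].
case: (cv_vec_ev d hxs hd) => N hN; exists N => k hk.
rewrite /R_dist; apply: Rle_lt_trans (hcd _ (hN k hk)).
exact: (vnorm_coord (vsub (J (xs k) i) (J xbar i)) j).
Qed.

Lemma hmt : mtapp (J xbar) lam = vzero.
Proof.
apply: functional_extensionality => j.
have h1 : Un_cv (fun k => mtapp (J (xs k)) (lk k) j) (mtapp (J xbar) lam j).
  rewrite /mtapp; apply: sum_cv => i; apply: CV_mult; first exact: hJent.
  exact: cv_vec_coord.
have h2 : Un_cv (fun k => mtapp (J (xs k)) (lk k) j) 0.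
  move=> e he; case: (hmtcv e he) => N hN; exists N => k hk; have := hN k hk.
  rewrite /R_dist !Rminus_0_r Rabs_pos_eq; last exact: vnorm_ge0.
  move=> h; apply: Rle_lt_trans h; exact: vnorm_coord.
exact: UL_sequence h1 h2.
Qed.

Lemma hlamJ x : dot lam (mapp (J xbar) x) = 0.
Proof. by rewrite dot_mapp hmt dot_zerol. Qed.

Let w k := vscal (/ tk k) (vsub (cs k) (g xbar)).

Lemma hw_in k : vadd (g xbar) (vscal (tk k) (w k)) = cs k.
Proof.
have := ht0 k => h; rewrite /w; apply: functional_extensionality => i; rewrite /vadd /vscal /vsub.
field; Lra.
Qed.

Lemma R1_bound eta : 0 < eta -> exists N, forall k, (k >= N)%coq_nat ->
  vnorm (vsub (vsub (g (xs k)) (g xbar)) (mapp (J xbar) (vsub (xs k) xbar))) <= eta * tk k.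
Proof.
move=> he.
have hx0 : vnorm (vsub xbar xbar) < delta.
  have -> : vsub xbar xbar = vzero by vext.
  by rewrite vnorm_zero.
case: (hg xbar hx0 eta he) => d [hd hdd].
case: (cv_vec_ev d hxs hd) => N hN; exists N => k hk; rewrite htk; exact: hdd _ (hN k hk).
Qed.

Lemma hwcv : cv_vec w (mapp (J xbar) u).
Proof.
apply/cv_vec_eps => eps heps.
have hM := mnorm_ge0 (J xbar).
have he4 : 0 < eps / 4 by Lra.
case: (R1_bound (eps / 4) he4) => N1 hN1.
case: (cv_vec_ev (eps / 4 / (mnorm (J xbar) + 1)) hucv ltac:(apply: Rdiv_lt_0_compat; Lra)) => N2 hN2.
case: (hecv (eps / 4) he4) => N3 hN3.
exists (Nat.add (Nat.add N1 N2) N3) => k hk.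
have hN1k := hN1 k ltac:(lia). have hN2k := hN2 k ltac:(lia). have hN3k := hN3 k ltac:(lia).
have htpos := ht0 k.
have hid : vsub (w k) (mapp (J xbar) u) =
  vadd (vadd (vscal (/ tk k) (vsub (vsub (g (xs k)) (g xbar)) (mapp (J xbar) (vsub (xs k) xbar))))
             (mapp (J xbar) (vsub (uk k) u)))
       (vscal (- / tk k) (vsub (g (xs k)) (cs k))).
  rewrite (mapp_sub (J xbar) (uk k) u) (huk k) mapp_scal /w; vext.
rewrite hid.
apply: Rle_lt_trans (vnorm_triang _ _) _.
have t1 := vnorm_triang (vscal (/ tk k) (vsub (vsub (g (xs k)) (g xbar)) (mapp (J xbar) (vsub (xs k) xbar))))
             (mapp (J xbar) (vsub (uk k) u)).
rewrite !vnorm_scal Rabs_Ropp Rabs_pos_eq in t1 *; last by left; apply: Rinv_0_lt_compat.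
have hinv : 0 < / tk k by apply: Rinv_0_lt_compat.
have b1 : / tk k * vnorm (vsub (vsub (g (xs k)) (g xbar)) (mapp (J xbar) (vsub (xs k) xbar))) <= eps / 4.
  have := Rmult_le_compat_l (/ tk k) _ _ (Rlt_le _ _ hinv) hN1k.
  have -> : / tk k * (eps / 4 * tk k) = eps / 4 by field; Lra.
  by [].
have b2 : vnorm (mapp (J xbar) (vsub (uk k) u)) < eps / 4.
  apply: Rle_lt_trans (mapp_bound _ _) _.
  have h := hN2k.
  have := Rmult_le_compat_l (mnorm (J xbar)) _ _ hM (Rlt_le _ _ h).
  have -> : mnorm (J xbar) * (eps / 4 / (mnorm (J xbar) + 1)) = eps / 4 * (mnorm (J xbar) / (mnorm (J xbar) + 1)) by field; Lra.
  have : mnorm (J xbar) / (mnorm (J xbar) + 1) < 1.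
    have hp : 0 < mnorm (J xbar) + 1 by Lra.
    have := Rmult_lt_compat_r (/ (mnorm (J xbar) + 1)) _ _ (Rinv_0_lt_compat _ hp) (Rlt_plus_1 (mnorm (J xbar))).
    by rewrite Rinv_r; [|Lra].
  Nra.
have b3 : / tk k * vnorm (vsub (g (xs k)) (cs k)) < eps / 4.
  have := hN3k; rewrite /R_dist Rminus_0_r -hek => h.
  have -> : / tk k * ek k = ek k / tk k by rewrite /Rdiv Rmult_comm.
  have := Rle_abs (ek k / tk k); Lra.
Lra.
Qed.

Lemma hcurv : Rbar_le (lower_curv C lam (g xbar) (mapp (J xbar) u)) (Fin_r (/ 2 * dot (mapp (hess_lag H lam) u) u)).
Proof.
have hu1 := unit_limit hucv huk1.
have hl1 := unit_limit hlcv hlk1.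
apply: lower_curv_le => e eta he heta.
have heta2 : 0 < eta / 2 by Lra.
case: (taylor2 hdel hg hJ lam heta2) => dT [hdT hT].
have hMn := mnorm_ge0 (hess_lag H lam).
case: (htcv (Rmin e dT) (Rmin_pos _ _ he hdT)) => N1 hN1.
case: (cv_vec_ev e hwcv he) => N2 hN2.
case: (cv_vec_ev (Rmin e (/ 2)) hlcv (Rmin_pos e (/ 2) he ltac:(Lra))) => N3 hN3.
case: (cv_vec_ev (eta / (2 * mnorm (hess_lag H lam) + 1)) hucv ltac:(apply: Rdiv_lt_0_compat; Lra)) => N4 hN4.
pose k := Nat.add (Nat.add (Nat.add N1 N2) N3) N4.
have hk1 := hN1 k ltac:(rewrite /k; lia). have hk2 := hN2 k ltac:(rewrite /k; lia).
have hk3 := hN3 k ltac:(rewrite /k; lia). have hk4 := hN4 k ltac:(rewrite /k; lia).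
clearbody k.
have htpos := ht0 k. have hepos := he0 k.
rewrite /R_dist Rminus_0_r Rabs_pos_eq in hk1; last Lra.
have hte : tk k < e by have := Rmin_l e dT; Lra.
have htd : tk k < dT by have := Rmin_r e dT; Lra.
have hle : vnorm (vsub (lk k) lam) < e by have := Rmin_l e (/ 2); Lra.
have hl2 : vnorm (vsub (lk k) lam) < / 2 by have := Rmin_r e (/ 2); Lra.
exists (tk k), (w k); split; first by Lra.
split => //.
split.
  rewrite hw_in; apply: (dist_lt (mu := lk k)); first exact: lim_normal_of_reg.
  by rewrite vnorm_sub_sym.
have e1 : dot lam (vsub (w k) (mapp (J xbar) u)) = / tk k * dot lam (vsub (cs k) (g xbar)).
  by rewrite dot_subr hlamJ /w dot_scalr; ring.
have e2 : vsub (cs k) (g xbar) = vsub (vadd (vsub (vsub (g (xs k)) (g xbar)) (mapp (J xbar) (vsub (xs k) xbar)))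
                                               (mapp (J xbar) (vsub (xs k) xbar))) (vsub (g (xs k)) (cs k)) by vext.
have e3 : vsub (g (xs k)) (cs k) = vscal (ek k) (lk k).
  rewrite hlk; apply: functional_extensionality => i; rewrite /vscal /vsub; field; Lra.
rewrite e1 e2 dot_subr dot_addr hlamJ e3 dot_scalr.
have dlk : 0 <= dot lam (lk k).
  have -> : dot lam (lk k) = dot lam lam + dot lam (vsub (lk k) lam) by rewrite dot_subr; ring.
  rewrite -vnorm_sq hl1.
  have := CS lam (vsub (lk k) lam); rewrite hl1 => /Rabs_le_inv; Lra.
have hTk := hT (xs k) ltac:(rewrite -htk; Lra).
rewrite -htk in hTk.
have eh : vsub (xs k) xbar = vscal (tk k) (uk k).
  rewrite huk; apply: functional_extensionality => i; rewrite /vscal; field; Lra.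
have hq := quadf_scal (hess_lag H lam) (tk k) (uk k).
rewrite /quadf -eh in hq; rewrite hq in hTk.
have hqd := quadf_diff (hess_lag H lam) (uk k) u.
rewrite /quadf huk1 hu1 in hqd.
have hqd2 : Rabs (dot (mapp (hess_lag H lam) (uk k)) (uk k) - dot (mapp (hess_lag H lam) u) u) <= eta.
  apply: Rle_trans hqd _.
  have := Rmult_le_compat_l (mnorm (hess_lag H lam)) _ _ hMn (Rlt_le _ _ hk4).
  move=> h.
  have : mnorm (hess_lag H lam) * (1 + 1) * vnorm (vsub (uk k) u) <= 2 * (mnorm (hess_lag H lam) * (eta / (2 * mnorm (hess_lag H lam) + 1))).
    move: h; rewrite /=; Lra.
  have -> : 2 * (mnorm (hess_lag H lam) * (eta / (2 * mnorm (hess_lag H lam) + 1))) = eta * (2 * mnorm (hess_lag H lam) / (2 * mnorm (hess_lag H lam) + 1)) by field; Lra.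
  have : 2 * mnorm (hess_lag H lam) / (2 * mnorm (hess_lag H lam) + 1) <= 1.
    have hp : 0 < 2 * mnorm (hess_lag H lam) + 1 by Lra.
    have := Rmult_le_compat_r (/ (2 * mnorm (hess_lag H lam) + 1)) _ _ (Rlt_le _ _ (Rinv_0_lt_compat _ hp)) (Rlt_le _ _ (Rlt_plus_1 (2 * mnorm (hess_lag H lam)))).
    by rewrite Rinv_r; [|Lra].
  Nra.
move: hTk hqd2 => /Rabs_le_inv hTk /Rabs_le_inv hqd2.
have hekd : 0 <= ek k * dot lam (lk k) by apply: Rmult_le_pos; Lra.
set Q := dot (mapp (hess_lag H lam) u) u.
set Qk := dot (mapp (hess_lag H lam) (uk k)) (uk k).
set R1 := dot lam (vsub (vsub (g (xs k)) (g xbar)) (mapp (J xbar) (vsub (xs k) xbar))).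
set T := tk k.
have hTT : 0 < T * T by rewrite /T; Nra.
have hnum : R1 + 0 - ek k * dot lam (lk k) <= (/ 2 * Q + eta) * (T * T).
  have : R1 <= / 2 * (T * T * Qk) + eta / 2 * (T * T) by Lra.
  have : T * T * Qk <= T * T * (Q + eta) by apply: Rmult_le_compat_l; Lra.
  Nra.
have -> : / T * (R1 + 0 - ek k * dot lam (lk k)) / T = (R1 + 0 - ek k * dot lam (lk k)) / (T * T) by rewrite /T; field; Lra.
apply: (Rmult_le_reg_r (T * T)) => //.
have -> : (R1 + 0 - ek k * dot lam (lk k)) / (T * T) * (T * T) = R1 + 0 - ek k * dot lam (lk k) by field; Lra.
by [].
Qed.

Lemma limit_all : u <> vzero /\ tangent_cone C (g xbar) (mapp (J xbar) u) /\
  dir_normal C (g xbar) (mapp (J xbar) u) lam /\ mtapp (J xbar) lam = vzero /\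
  Rbar_le (lower_curv C lam (g xbar) (mapp (J xbar) u)) (Fin_r (/ 2 * dot (mapp (hess_lag H lam) u) u)) /\
  lam <> vzero.
Proof.
have hu1 := unit_limit hucv huk1.
have hl1 := unit_limit hlcv hlk1.
split; first exact: vnorm_vzero_neq.
split.
  exists tk, w; split; first by split.
  split; first exact: hwcv.
  by move=> k; rewrite hw_in.
split.
  exists tk, w, lk; split; first by split.
  split; first exact: hwcv. split => //.
  by move=> k; rewrite hw_in.
split; first exact: hmt.
split; last exact: vnorm_vzero_neq.
exact: hcurv.
Qed.

End Limit.

Unset Implicit Arguments.


Definition lamof {n l} (g : vec n -> vec l) xt ct := vscal (/ vnorm (vsub (g xt) ct)) (vsub (g xt) ct).

Lemma per_k {n l} (C : vec l -> Prop) (g : vec n -> vec l) (xbar : vec n) (J : vec n -> mat l n) delta :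
  is_closed C -> C (g xbar) -> 0 < delta ->
  (forall y, vnorm (vsub y xbar) < delta -> fdiff g y (J y)) ->
  ~ metric_subregular g C xbar ->
  forall k : nat, exists p : vec n * vec l,
    C p.2 /\ 0 < vnorm (vsub (g p.1) p.2) /\ 0 < vnorm (vsub p.1 xbar) /\
    vnorm (vsub p.1 xbar) <= delta / 2 / (INR k + 1) /\
    vnorm (vsub (g p.1) p.2) <= 2 / (INR k + 1) * vnorm (vsub p.1 xbar) /\
    reg_normal C p.2 (lamof g p.1 p.2) /\
    vnorm (mtapp (J p.1) (lamof g p.1 p.2)) <= 4 / (INR k + 1).
Proof.
move=> hC hCx hdel hg hns k.
have hkap : 0 < INR k + 1 by have := pos_INR k; Lra.
have hkap1 : 1 <= INR k + 1 by have := pos_INR k; Lra.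
have hd : 0 < delta / 4 / (INR k + 1) by apply: Rdiv_lt_0_compat; Lra.
have hd2 : delta / 4 / (INR k + 1) <= delta / 4.
  rewrite /Rdiv; rewrite -{2}(Rmult_1_r (delta * / 4)); apply: Rmult_le_compat_l; first Lra.
  rewrite -Rinv_1; apply: Rinv_le_contravar; Lra.
have [x [hx hnle]] : exists x, vnorm (vsub x xbar) < delta / 4 / (INR k + 1) /\
    ~ Rbar_le (dist_set (fun y => C (g y)) x) (Fin_r ((INR k + 1) * real_of (dist_set C (g x)))).
  apply: NNPP => hno; apply: hns; exists (INR k + 1), (delta / 4 / (INR k + 1)); split; first Lra.
  split => // x hx; apply: NNPP => hn; apply: hno; by exists x.
have [r [hr [hr0 [hrS hrA]]]] := dist_set_spec (S := fun y => C (g y)) x hCx.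
have [eps [heps [heps0 [heS heA]]]] := dist_set_spec (S := C) (g x) hCx.
rewrite hr heps /= in hnle.
have hre : (INR k + 1) * eps < r by Lra.
have hkeps : 0 <= (INR k + 1) * eps by apply: Rmult_le_pos; Lra.
have hrpos : 0 < r by Lra.
have hrx : r <= vnorm (vsub x xbar) by apply: hrS.
have [xt [ct [hct [het0 [hete [hxt [hreg hst]]]]]]] :=
  @core n l C g J x r eps hC hrpos
   ltac:(move=> y hy; apply: hg; have := vnorm_sub_triang y x xbar; Lra)
   hrS ltac:(move=> eta heta; case: (heA eta heta) => c [hc hc2]; by exists c).
exists (xt, ct) => /=.
have t1 := vnorm_sub_triang x xt xbar.
have t2 := vnorm_sub_triang xt x xbar.
rewrite (vnorm_sub_sym x xt) in t1.
have htpos : 0 < vnorm (vsub xt xbar) by Lra.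
split => //; split => //; split => //.
split.
  have : vnorm (vsub xt xbar) < 2 * (delta / 4 / (INR k + 1)) by Lra.
  have -> : 2 * (delta / 4 / (INR k + 1)) = delta / 2 / (INR k + 1) by field; Lra.
  Lra.
split.
  have h3 : (INR k + 1) * eps <= 2 * vnorm (vsub xt xbar) by Lra.
  apply: Rle_trans hete _.
  apply: (Rmult_le_reg_l (INR k + 1)) => //.
  have -> : (INR k + 1) * (2 / (INR k + 1) * vnorm (vsub xt xbar)) = 2 * vnorm (vsub xt xbar) by field; Lra.
  by [].
split => //.
apply: Rle_trans hst _.
have h1 : 4 * eps / r = 4 * ((INR k + 1) * eps) / ((INR k + 1) * r) by field; Lra.
rewrite h1.
have h2 : 4 / (INR k + 1) = 4 * r / ((INR k + 1) * r) by field; Lra.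
rewrite h2.
apply: Rmult_le_compat_r; first by left; apply: Rinv_0_lt_compat; apply: Rmult_lt_0_compat.
Lra.
Qed.

Lemma Un_cv_le_inv (a : nat -> R) c : (forall j, 0 <= a j <= c / (INR j + 1)) -> Un_cv a 0.
Proof.
move=> h e he.
have hc : 0 <= c.
  have [h1 h2] := h O.
  have e0 : c / (INR 0 + 1) = c by rewrite /=; field.
  Lra.
case: (inv_small (eps := e / (c + 1)) ltac:(apply: Rdiv_lt_0_compat; Lra)) => N hN.
exists N => j hj; rewrite /R_dist Rminus_0_r.
have [h1 h2] := h j.
rewrite Rabs_pos_eq //.
apply: Rle_lt_trans h2 _.
have := hN j hj => h3.
have hp : 0 < INR j + 1 by have := pos_INR j; Lra.
have : c / (INR j + 1) <= c * (e / (c + 1)).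
  rewrite /Rdiv; apply: Rmult_le_compat_l => //; Lra.
have : c * (e / (c + 1)) < e.
  have -> : c * (e / (c + 1)) = e * (c / (c + 1)) by field; Lra.
  have : c / (c + 1) < 1.
    have := Rmult_lt_compat_r (/ (c + 1)) _ _ (Rinv_0_lt_compat (c + 1) ltac:(Lra)) (Rlt_plus_1 c).
    by rewrite Rinv_r; [|Lra].
  Nra.
Lra.
Qed.

Unset Implicit Arguments.

Lemma unit_scal {n} (v : vec n) : 0 < vnorm v -> vnorm (vscal (/ vnorm v) v) = 1.
Proof.
move=> h; rewrite vnorm_scal Rabs_pos_eq; last by left; apply: Rinv_0_lt_compat.
field; Lra.
Qed.

Lemma inv_sub_le c j phi : 0 <= c -> subs phi -> c / (INR (phi j) + 1) <= c / (INR j + 1).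
Proof.
move=> hc hp; rewrite /Rdiv; apply: Rmult_le_compat_l => //; apply: inv_INR_le; exact: subs_ge.
Qed.

Theorem corollary4p6 (n l : nat) (C : vec l -> Prop) (g : vec n -> vec l)
    (xbar : vec n) (J : vec n -> mat l n) (H : 'I_l -> mat n n) (delta : R) :
  is_closed C ->
  C (g xbar) ->
  0 < delta ->
  (forall y, vnorm (vsub y xbar) < delta -> fdiff g y (J y)) ->
  (forall y, vnorm (vsub y xbar) < delta -> forall i, cont_at (fun z => J z i) y) ->
  (forall i, fdiff (fun z => J z i) xbar (H i)) ->
  (forall (u : vec n) (lam : vec l),
      u <> vzero ->
      tangent_cone C (g xbar) (mapp (J xbar) u) ->
      dir_normal C (g xbar) (mapp (J xbar) u) lam ->
      mtapp (J xbar) lam = vzero ->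
      Rbar_le (lower_curv C lam (g xbar) (mapp (J xbar) u))
              (Fin_r (Rinv 2 * dot (mapp (hess_lag H lam) u) u)) ->
      lam = vzero) ->
  metric_subregular g C xbar.
Proof.
move=> hC hCx hdel hg hJc hJ hyp.
apply: NNPP => hns.
have hk := per_k C g xbar J delta hC hCx hdel hg hns.
have [f hf] := @choice_nat _ _ hk.
have [phi1 [u [hp1 hcv1]]] := @BW_vec n (fun k => vscal (/ vnorm (vsub (f k).1 xbar)) (vsub (f k).1 xbar)) 1
  ltac:(move=> k; rewrite unit_scal; [lra| by case: (hf k) => _ [_ [h _]]]).
have [phi2 [lam [hp2 hcv2]]] := @BW_vec l (fun j => lamof g (f (phi1 j)).1 (f (phi1 j)).2) 1
  ltac:(move=> k; rewrite /lamof unit_scal; [lra| by case: (hf (phi1 k)) => _ [h _]]).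
have hpsi : subs (fun j => phi1 (phi2 j)) by apply: subs_comp.
have hucv := cv_vec_subs hp2 hcv1.
have hT : Un_cv (fun j => vnorm (vsub (f (phi1 (phi2 j))).1 xbar)) 0.
  apply: (Un_cv_le_inv _ (delta / 2)) => j.
  have [_ [_ [h0 [h1 _]]]] := hf (phi1 (phi2 j)).
  split; first lra.
  apply: Rle_trans h1 _; apply: (inv_sub_le _ j (fun j => phi1 (phi2 j))) => //; lra.
have hE : Un_cv (fun j => vnorm (vsub (g (f (phi1 (phi2 j))).1) (f (phi1 (phi2 j))).2) / vnorm (vsub (f (phi1 (phi2 j))).1 xbar)) 0.
  apply: (Un_cv_le_inv _ (2)) => j.
  have [_ [he [h0 [_ [h2 _]]]]] := hf (phi1 (phi2 j)).
  split; first by left; apply: Rdiv_lt_0_compat.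
  apply: Rle_trans (_ : _ <= 2 / (INR (phi1 (phi2 j)) + 1)) _; last by apply: (inv_sub_le _ j (fun j => phi1 (phi2 j))) => //; lra.
  apply: (Rmult_le_reg_r (vnorm (vsub (f (phi1 (phi2 j))).1 xbar))) => //.
  rewrite /Rdiv Rmult_assoc Rinv_l; last lra.
  by rewrite Rmult_1_r.
have hM : Un_cv (fun j => vnorm (mtapp (J (f (phi1 (phi2 j))).1)
     (vscal (/ vnorm (vsub (g (f (phi1 (phi2 j))).1) (f (phi1 (phi2 j))).2)) (vsub (g (f (phi1 (phi2 j))).1) (f (phi1 (phi2 j))).2)))) 0.
  apply: (Un_cv_le_inv _ (4)) => j.
  have [_ [_ [_ [_ [_ [_ h]]]]]] := hf (phi1 (phi2 j)).
  split; first exact: vnorm_ge0.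
  apply: Rle_trans h _; apply: (inv_sub_le _ j (fun j => phi1 (phi2 j))) => //; lra.
have [hu0 [htan [hdir [hmt [hcurv hl0]]]]] :=
  limit_all n l C g xbar J H delta
   (fun j => (f (phi1 (phi2 j))).1) (fun j => (f (phi1 (phi2 j))).2)
   (fun j => vnorm (vsub (f (phi1 (phi2 j))).1 xbar))
   (fun j => vnorm (vsub (g (f (phi1 (phi2 j))).1) (f (phi1 (phi2 j))).2))
   (fun j => vscal (/ vnorm (vsub (f (phi1 (phi2 j))).1 xbar)) (vsub (f (phi1 (phi2 j))).1 xbar))
   (fun j => vscal (/ vnorm (vsub (g (f (phi1 (phi2 j))).1) (f (phi1 (phi2 j))).2)) (vsub (g (f (phi1 (phi2 j))).1) (f (phi1 (phi2 j))).2))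
   u lam hdel hg hJc hJ
   (fun k => erefl) (fun k => erefl) (fun k => erefl) (fun k => erefl)
   (fun k => (hf _).1)
   (fun k => (hf _).2.2.1)
   hT
   (fun k => (hf _).2.1)
   hE
   (fun k => (hf _).2.2.2.2.2.1)
   hM hucv hcv2.
exact: (hl0 (hyp u lam hu0 htan hdir hmt hcurv)).
Qed.
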